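(* Let $r_V,r_A,a_1,a_2,b_1,b_2,c_V,c_A,K_{V,1},K_{V,2},K_{A,1},K_{A,2}>0$, $n>1$, $\mu_{V,1},\mu_{V,2},\mu_{A,1},\mu_{A,2}>0$, $d_{V,12},d_{V,21},d_{A,12},d_{A,21}>0$ and $\alpha_1,\alpha_2\in(0,1)$. For $i\ne j\in\{1,2\}$ put $d_{V,ij}'=d_{V,ij}\frac{\alpha_i^n}{\alpha_i^n+c_V^n}$, $d_{A,ij}'=d_{A,ij}\frac{\alpha_i^n}{\alpha_i^n+c_A^n}$, $K_{A,i}'=(1-\alpha_i)K_{A,i}$, and consider on $\mathbb{R}_+^4$ the system (for $i\ne j$) $$\begin{aligned} \dot V_i&=r_V\tfrac{A_i}{A_i+a_i}V_i\big(1-\tfrac{V_i}{K_{V,i}}\big)-d_{V,ij}'\tfrac{1}{1+b_iA_i}V_i+d_{V,ji}'\tfrac{1}{1+b_jA_j}V_j-\mu_{V,i}V_i,\\ \dot A_i&=r_AA_i\big(1-\tfrac{A_i}{K_{A,i}'}\big)-d_{A,ij}'A_i+d_{A,ji}'A_j-\mu_{A,i}A_i . \end{aligned}$$ Define $\mathcal{Q}_{0A,1}=\frac{r_A}{\mu_{A,1}+d_{A,12}'}$, $\mathcal{Q}_{0A,2}=\frac{r_A}{\mu_{A,2}+d_{A,21}'}$, $$\bar r_A=\tfrac{1}{2}(d_{A,12}'+\mu_{A,1}+d_{A,21}'+\mu_{A,2}),\quad \Delta_{r_A}=(d_{A,21}'-d_{A,12}'+\mu_{A,2}-\mu_{A,1})^2+4d_{A,21}'d_{A,12}',\quad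 r_{A,\min}=\bar r_A-\tfrac12\sqrt{\Delta_{r_A}}.$$ Then: 1. $E_{0000}=(0,0,0,0)$ is an equilibrium for all parameter values, and it is locally asymptotically stable (LAS) if $r_A<r_{A,\min}$. 2. If $\mathcal{Q}_{0A,1}\ge 1$ or $\mathcal{Q}_{0A,2}\ge 1$, there exists at least one equilibrium of the form $E_{0A_10A_2}=(0,A_{1,+},0,A_{2,+})$ with $A_{1,+},A_{2,+}>0$. Any such equilibrium is LAS if $B_1<0$ and $B_2>0$, where, with $j_{11}=r_V\frac{A_{1,+}}{A_{1,+}+a_1}-\frac{d_{V,12}'}{1+b_1A_{1,+}}-\mu_{V,1}$ and $j_{33}=r_V\frac{A_{2,+}}{A_{2,+}+a_2}-\frac{d_{V,21}'}{1+b_2A_{2,+}}-\mu_{V,2}$, $$B_1=j_{11}+j_{33},\qquad B_2=j_{11}j_{33}-\frac{d_{V,21}'}{1+b_2A_{2,+}}\cdot\frac{d_{V,12}'}{1+b_1A_{1,+}}.$$ 3. Suppose $\mathcal{Q}_{0A,1}\ge1$ or $\mathcal{Q}_{0A,2}\ge 1$, let $(A_{1,+},A_{2,+})$ with $A_{1,+},A_{2,+}>0$ be such that $(0,A_{1,+},0,A_{2,+})$ is an equilibrium, and set $$\mathcal{S}_{0V,1}=\frac{r_V\frac{A_{1,+}}{A_{1,+}+a_1}}{\frac{d_{V,12}'}{1+b_1A_{1,+}}+\mu_{V,1}},\qquad \mathcal{S}_{0V,2}=\frac{r_V\frac{A_{2,+}}{A_{2,+}+a_2}}{\frac{d_{V,21}'}{1+b_2A_{2,+}}+\mu_{V,2}}.$$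 If $\mathcal{S}_{0V,1}\ge1$ or $\mathcal{S}_{0V,2}\ge1$, there exists at least one coexistence equilibrium $E=(V_{1,+},A_{1,+},V_{2,+},A_{2,+})$ with all components positive. Such an equilibrium $E=(V_1,A_1,V_2,A_2)$ is LAS whenever $C_1>0$ and $C_2>0$, where $$J_{11}=-r_V\tfrac{A_1}{A_1+a_1}\tfrac{V_1}{K_{V,1}}-\tfrac{d_{V,21}'}{1+b_2A_2}\tfrac{V_2}{V_1},\quad J_{13}=\tfrac{d_{V,21}'}{1+b_2A_2},\quad J_{22}=-r_A\tfrac{A_1}{K_{A,1}'}-d_{A,21}'\tfrac{A_2}{A_1},\quad J_{24}=d_{A,21}',$$ $$J_{31}=\tfrac{d_{V,12}'}{1+b_1A_1},\quad J_{33}=-r_V\tfrac{A_2}{A_2+a_2}\tfrac{V_2}{K_{V,2}}-\tfrac{d_{V,12}'}{1+b_1A_1}\tfrac{V_1}{V_2},\quad J_{42}=d_{A,12}',\quad J_{44}=-r_A\tfrac{A_2}{K_{A,2}'}-d_{A,12}'\tfrac{A_1}{A_2},$$ $$P=-J_{42}J_{24}+J_{44}J_{33}+J_{44}J_{22}+J_{44}J_{11}-J_{31}J_{13}+J_{33}J_{22}+J_{33}J_{11}+J_{22}J_{11},$$ $$N=J_{42}J_{24}J_{33}+J_{42}J_{24}J_{11}+J_{44}J_{31}J_{13}-J_{44}J_{33}J_{22}-J_{44}J_{33}J_{11}-J_{44}J_{22}J_{11}+J_{31}J_{13}J_{22}-J_{33}J_{22}J_{11},$$ $$C_3=-J_{44}-J_{33}-J_{22}-J_{11},\qquad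 C_4=J_{42}J_{24}J_{31}J_{13}-J_{42}J_{24}J_{33}J_{11}-J_{44}J_{31}J_{13}J_{22}+J_{44}J_{33}J_{22}J_{11},$$ $$C_1=P-\frac{N}{C_3},\qquad C_2=N-\frac{C_3\,C_4}{C_1}.$$
   Context: This is a two-patch vector ($V_i$)–animal ($A_i$) model with two-way, anthropization-dependent migration; $\alpha_i$ is the anthropization level of patch $i$. LAS means locally asymptotically stable. *)

(* Defs.v *)
From Stdlib Require Import Reals Lra.
From Coquelicot Require Import Coquelicot.
Open Scope R_scope.

Record params := Params {
  rV : R; rA : R; a1 : R; a2 : R; b1 : R; b2 : R; cV : R; cA : R;
  KV1 : R; KV2 : R; KA1 : R; KA2 : R; nexp : R;
  muV1 : R; muV2 : R; muA1 : R; muA2 : R;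
  dV12 : R; dV21 : R; dA12 : R; dA21 : R;
  al1 : R; al2 : R }.

Definition admissible (p : params) : Prop :=
  0 < rV p /\ 0 < rA p /\ 0 < a1 p /\ 0 < a2 p /\ 0 < b1 p /\ 0 < b2 p /\
  0 < cV p /\ 0 < cA p /\ 0 < KV1 p /\ 0 < KV2 p /\ 0 < KA1 p /\ 0 < KA2 p /\
  1 < nexp p /\
  0 < muV1 p /\ 0 < muV2 p /\ 0 < muA1 p /\ 0 < muA2 p /\
  0 < dV12 p /\ 0 < dV21 p /\ 0 < dA12 p /\ 0 < dA21 p /\
  0 < al1 p < 1 /\ 0 < al2 p < 1.

(* Anthropization-dependent migration rates and carrying capacities.
   x^n for real n is Rpower x n (x > 0). *)
Definition dVp12 p := dV12 p * (Rpower (al1 p) (nexp p) / (Rpower (al1 p) (nexp p) + Rpower (cV p) (nexp p))).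
Definition dVp21 p := dV21 p * (Rpower (al2 p) (nexp p) / (Rpower (al2 p) (nexp p) + Rpower (cV p) (nexp p))).
Definition dAp12 p := dA12 p * (Rpower (al1 p) (nexp p) / (Rpower (al1 p) (nexp p) + Rpower (cA p) (nexp p))).
Definition dAp21 p := dA21 p * (Rpower (al2 p) (nexp p) / (Rpower (al2 p) (nexp p) + Rpower (cA p) (nexp p))).
Definition KAp1 p := (1 - al1 p) * KA1 p.
Definition KAp2 p := (1 - al2 p) * KA2 p.

Record state := St { sV1 : R; sA1 : R; sV2 : R; sA2 : R }.

Definition fV1 p (x : state) : R :=
  rV p * (sA1 x / (sA1 x + a1 p)) * sV1 x * (1 - sV1 x / KV1 p)
  - dVp12 p * (1 / (1 + b1 p * sA1 x)) * sV1 x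
  + dVp21 p * (1 / (1 + b2 p * sA2 x)) * sV2 x
  - muV1 p * sV1 x.
Definition fV2 p (x : state) : R :=
  rV p * (sA2 x / (sA2 x + a2 p)) * sV2 x * (1 - sV2 x / KV2 p)
  - dVp21 p * (1 / (1 + b2 p * sA2 x)) * sV2 x
  + dVp12 p * (1 / (1 + b1 p * sA1 x)) * sV1 x
  - muV2 p * sV2 x.
Definition fA1 p (x : state) : R :=
  rA p * sA1 x * (1 - sA1 x / KAp1 p) - dAp12 p * sA1 x + dAp21 p * sA2 x
  - muA1 p * sA1 x.
Definition fA2 p (x : state) : R :=
  rA p * sA2 x * (1 - sA2 x / KAp2 p) - dAp21 p * sA2 x + dAp12 p * sA1 x
  - muA2 p * sA2 x.

Definition equilibrium p (E : state) : Prop :=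
  fV1 p E = 0 /\ fA1 p E = 0 /\ fV2 p E = 0 /\ fA2 p E = 0.

Definition nonneg (x : state) : Prop :=
  0 <= sV1 x /\ 0 <= sA1 x /\ 0 <= sV2 x /\ 0 <= sA2 x.

Definition sdist (x y : state) : R :=
  Rmax (Rmax (Rabs (sV1 x - sV1 y)) (Rabs (sA1 x - sA1 y)))
       (Rmax (Rabs (sV2 x - sV2 y)) (Rabs (sA2 x - sA2 y))).

(* x is a solution of the system on [0, +oo). (A two-sided derivative at
   t = 0 is no restriction: any solution on [0,+oo) extends to the left.) *)
Definition solution p (x : R -> state) : Prop :=
  forall t, 0 <= t ->
    is_derive (fun s => sV1 (x s)) t (fV1 p (x t)) /\
    is_derive (fun s => sA1 (x s)) t (fA1 p (x t)) /\
    is_derive (fun s => sV2 (x s)) t (fV2 p (x t)) /\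
    is_derive (fun s => sA2 (x s)) t (fA2 p (x t)).

Definition LAS p (E : state) : Prop :=
  equilibrium p E /\
  (forall eps, 0 < eps -> exists delta, 0 < delta /\
     forall x, solution p x -> nonneg (x 0) -> sdist (x 0) E < delta ->
       forall t, 0 <= t -> sdist (x t) E < eps) /\
  (exists delta, 0 < delta /\
     forall x, solution p x -> nonneg (x 0) -> sdist (x 0) E < delta ->
       is_lim (fun t => sdist (x t) E) p_infty 0).

Definition Q0A1 p := rA p / (muA1 p + dAp12 p).
Definition Q0A2 p := rA p / (muA2 p + dAp21 p).
Definition rA_bar p := / 2 * (dAp12 p + muA1 p + dAp21 p + muA2 p).
Definition Delta_rA p :=
  (dAp21 p - dAp12 p + muA2 p - muA1 p) ^ 2 + 4 * dAp21 p * dAp12 p.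
Definition rA_min p := rA_bar p - / 2 * sqrt (Delta_rA p).

Definition j11 p A1 := rV p * (A1 / (A1 + a1 p)) - dVp12 p / (1 + b1 p * A1) - muV1 p.
Definition j33 p A2 := rV p * (A2 / (A2 + a2 p)) - dVp21 p / (1 + b2 p * A2) - muV2 p.
Definition mB1 p A1 A2 := j11 p A1 + j33 p A2.
Definition mB2 p A1 A2 :=
  j11 p A1 * j33 p A2 - dVp21 p / (1 + b2 p * A2) * (dVp12 p / (1 + b1 p * A1)).

Definition S0V1 p A1 := (rV p * (A1 / (A1 + a1 p))) / (dVp12 p / (1 + b1 p * A1) + muV1 p).
Definition S0V2 p A2 := (rV p * (A2 / (A2 + a2 p))) / (dVp21 p / (1 + b2 p * A2) + muV2 p).

Section Coex.
Variable p : params.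
Variable E : state.
Let V1 := sV1 E. Let A1 := sA1 E. Let V2 := sV2 E. Let A2 := sA2 E.
Definition J11 := - rV p * (A1 / (A1 + a1 p)) * (V1 / KV1 p) - dVp21 p / (1 + b2 p * A2) * (V2 / V1).
Definition J13 := dVp21 p / (1 + b2 p * A2).
Definition J22 := - rA p * (A1 / KAp1 p) - dAp21 p * (A2 / A1).
Definition J24 := dAp21 p.
Definition J31 := dVp12 p / (1 + b1 p * A1).
Definition J33 := - rV p * (A2 / (A2 + a2 p)) * (V2 / KV2 p) - dVp12 p / (1 + b1 p * A1) * (V1 / V2).
Definition J42 := dAp12 p.
Definition J44 := - rA p * (A2 / KAp2 p) - dAp12 p * (A1 / A2).
Definition Pc := - J42 * J24 + J44 * J33 + J44 * J22 + J44 * J11 - J31 * J13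
                 + J33 * J22 + J33 * J11 + J22 * J11.
Definition Nc := J42 * J24 * J33 + J42 * J24 * J11 + J44 * J31 * J13
                 - J44 * J33 * J22 - J44 * J33 * J11 - J44 * J22 * J11
                 + J31 * J13 * J22 - J33 * J22 * J11.
Definition mC3 := - J44 - J33 - J22 - J11.
Definition mC4 := J42 * J24 * J31 * J13 - J42 * J24 * J33 * J11
                 - J44 * J31 * J13 * J22 + J44 * J33 * J22 * J11.
Definition mC1 := Pc - Nc / mC3.
Definition mC2 := Nc - mC3 * mC4 / mC1.
End Coex.

(* Main.v *)
Require Import Defs.
From Stdlib Require Import Reals Lra Psatz.
From Coquelicot Require Import Coquelicot.
Open Scope R_scope.


Lemma sdist_ge1 x E : Rabs (sV1 x - sV1 E) <= sdist x E.
Proof. unfold sdist. eapply Rle_trans; [|apply Rmax_l]. apply Rmax_l. Qed.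
Lemma sdist_ge2 x E : Rabs (sA1 x - sA1 E) <= sdist x E.
Proof. unfold sdist. eapply Rle_trans; [|apply Rmax_l]. apply Rmax_r. Qed.
Lemma sdist_ge3 x E : Rabs (sV2 x - sV2 E) <= sdist x E.
Proof. unfold sdist. eapply Rle_trans; [|apply Rmax_r]. apply Rmax_l. Qed.
Lemma sdist_ge4 x E : Rabs (sA2 x - sA2 E) <= sdist x E.
Proof. unfold sdist. eapply Rle_trans; [|apply Rmax_r]. apply Rmax_r. Qed.
Lemma sdist_nonneg x E : 0 <= sdist x E.
Proof. eapply Rle_trans; [apply Rabs_pos| apply sdist_ge1]. Qed.

Definition ssq (E x : state) :=
  (sV1 x - sV1 E)^2 + (sA1 x - sA1 E)^2 + (sV2 x - sV2 E)^2 + (sA2 x - sA2 E)^2.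

Lemma max4_sq a b c d : 0 <= a -> 0 <= b -> 0 <= c -> 0 <= d ->
  (Rmax (Rmax a b) (Rmax c d))^2 <= a^2 + b^2 + c^2 + d^2.
Proof.
  intros. unfold Rmax; repeat destruct Rle_dec; nra.
Qed.

Lemma sdist_sq_le x E : (sdist x E)^2 <= ssq E x.
Proof.
  unfold sdist, ssq.
  rewrite <- (pow2_abs (sV1 x - sV1 E)), <- (pow2_abs (sA1 x - sA1 E)),
    <- (pow2_abs (sV2 x - sV2 E)), <- (pow2_abs (sA2 x - sA2 E)).
  apply max4_sq; apply Rabs_pos.
Qed.

Lemma sq_le_of_abs u s : Rabs u <= s -> u^2 <= s^2.
Proof. intros H. rewrite <- (pow2_abs u). pose proof (Rabs_pos u). nra. Qed.

Lemma ssq_le x E : ssq E x <= 4 * (sdist x E)^2.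
Proof.
  unfold ssq.
  pose proof (sq_le_of_abs _ _ (sdist_ge1 x E)).
  pose proof (sq_le_of_abs _ _ (sdist_ge2 x E)).
  pose proof (sq_le_of_abs _ _ (sdist_ge3 x E)).
  pose proof (sq_le_of_abs _ _ (sdist_ge4 x E)). lra.
Qed.

Definition dotd (l x E : state) :=
  sV1 l * (sV1 x - sV1 E) + sA1 l * (sA1 x - sA1 E)
  + sV2 l * (sV2 x - sV2 E) + sA2 l * (sA2 x - sA2 E).
Definition nrm1 (l : state) :=
  Rabs (sV1 l) + Rabs (sA1 l) + Rabs (sV2 l) + Rabs (sA2 l).

Lemma nrm1_nonneg l : 0 <= nrm1 l.
Proof. unfold nrm1. pose proof (Rabs_pos (sV1 l)). pose proof (Rabs_pos (sA1 l)).
  pose proof (Rabs_pos (sV2 l)). pose proof (Rabs_pos (sA2 l)). lra. Qed.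

Lemma abs_mul_le a u s : Rabs u <= s -> Rabs (a * u) <= Rabs a * s.
Proof. intros. rewrite Rabs_mult. apply Rmult_le_compat_l; [apply Rabs_pos|auto]. Qed.

Lemma dotd_bound l x E : Rabs (dotd l x E) <= nrm1 l * sdist x E.
Proof.
  unfold dotd, nrm1.
  pose proof (abs_mul_le (sV1 l) _ _ (sdist_ge1 x E)).
  pose proof (abs_mul_le (sA1 l) _ _ (sdist_ge2 x E)).
  pose proof (abs_mul_le (sV2 l) _ _ (sdist_ge3 x E)).
  pose proof (abs_mul_le (sA2 l) _ _ (sdist_ge4 x E)).
  pose proof (Rabs_triang (sV1 l * (sV1 x - sV1 E) + sA1 l * (sA1 x - sA1 E) + sV2 l * (sV2 x - sV2 E)) (sA2 l * (sA2 x - sA2 E))).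
  pose proof (Rabs_triang (sV1 l * (sV1 x - sV1 E) + sA1 l * (sA1 x - sA1 E)) (sV2 l * (sV2 x - sV2 E))).
  pose proof (Rabs_triang (sV1 l * (sV1 x - sV1 E)) (sA1 l * (sA1 x - sA1 E))).
  lra.
Qed.

Definition lin (g : state -> R) (E l : state) :=
  forall eps, 0 < eps -> exists d, 0 < d /\ forall x, sdist x E < d ->
    Rabs (g x - g E - dotd l x E) <= eps * sdist x E.

Lemma lin_bound g E l : lin g E l -> exists d, 0 < d /\ forall x, sdist x E < d ->
  Rabs (g x - g E) <= (nrm1 l + 1) * sdist x E.
Proof.
  intros H. destruct (H 1 Rlt_0_1) as [d [Hd Hx]]. exists d. split; auto.
  intros x Hs. specialize (Hx x Hs). pose proof (dotd_bound l x E).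
  replace (g x - g E) with ((g x - g E - dotd l x E) + dotd l x E) by ring.
  eapply Rle_trans; [apply Rabs_triang|]. lra.
Qed.

Lemma lin_ext g g' E l a b c d : lin g E l -> (forall x, g x = g' x) ->
  sV1 l = a -> sA1 l = b -> sV2 l = c -> sA2 l = d -> lin g' E (St a b c d).
Proof.
  intros H Hg H1 H2 H3 H4 eps He. destruct (H eps He) as [d0 [Hd Hx]].
  exists d0; split; auto. intros x Hs. rewrite <- !Hg.
  specialize (Hx x Hs). unfold dotd in *; simpl; subst; exact Hx.
Qed.

Lemma lin_const c E : lin (fun _ => c) E (St 0 0 0 0).
Proof.
  intros eps He. exists 1. split; [lra|]. intros x _. unfold dotd; simpl.
  replace (c - c - _) with 0 by ring. rewrite Rabs_R0.
  pose proof (sdist_nonneg x E). nra.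
Qed.

Lemma lin_zero_err g E l : (forall x, g x - g E - dotd l x E = 0) -> lin g E l.
Proof.
  intros H eps He. exists 1. split; [lra|]. intros x _. rewrite H, Rabs_R0.
  pose proof (sdist_nonneg x E). nra.
Qed.

Lemma lin_V1 E : lin sV1 E (St 1 0 0 0).
Proof. apply lin_zero_err. intros. unfold dotd; simpl; ring. Qed.
Lemma lin_A1 E : lin sA1 E (St 0 1 0 0).
Proof. apply lin_zero_err. intros. unfold dotd; simpl; ring. Qed.
Lemma lin_V2 E : lin sV2 E (St 0 0 1 0).
Proof. apply lin_zero_err. intros. unfold dotd; simpl; ring. Qed.
Lemma lin_A2 E : lin sA2 E (St 0 0 0 1).
Proof. apply lin_zero_err. intros. unfold dotd; simpl; ring. Qed.

Definition addS (l m : state) :=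
  St (sV1 l + sV1 m) (sA1 l + sA1 m) (sV2 l + sV2 m) (sA2 l + sA2 m).
Definition scalS (c : R) (l : state) :=
  St (c * sV1 l) (c * sA1 l) (c * sV2 l) (c * sA2 l).

Lemma dotd_add l m x E : dotd (addS l m) x E = dotd l x E + dotd m x E.
Proof. unfold dotd, addS; simpl; ring. Qed.
Lemma dotd_scal c l x E : dotd (scalS c l) x E = c * dotd l x E.
Proof. unfold dotd, scalS; simpl; ring. Qed.

Lemma lin_plus f g E l m : lin f E l -> lin g E m ->
  lin (fun x => f x + g x) E (addS l m).
Proof.
  intros Hf Hg eps He.
  destruct (Hf (eps/2)) as [d1 [Hd1 H1]]; [lra|].
  destruct (Hg (eps/2)) as [d2 [Hd2 H2]]; [lra|].
  exists (Rmin d1 d2). split; [apply Rmin_pos; auto|].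
  intros x Hs. specialize (H1 x (Rlt_le_trans _ _ _ Hs (Rmin_l _ _))).
  specialize (H2 x (Rlt_le_trans _ _ _ Hs (Rmin_r _ _))).
  rewrite dotd_add.
  replace (f x + g x - (f E + g E) - (dotd l x E + dotd m x E)) with
    ((f x - f E - dotd l x E) + (g x - g E - dotd m x E)) by ring.
  eapply Rle_trans; [apply Rabs_triang|]. lra.
Qed.

Lemma lin_scal c f E l : lin f E l -> lin (fun x => c * f x) E (scalS c l).
Proof.
  intros Hf eps He.
  destruct (Hf (eps/(Rabs c + 1))) as [d1 [Hd1 H1]].
  { apply Rdiv_lt_0_compat; auto. pose proof (Rabs_pos c); lra. }
  exists d1. split; auto. intros x Hs. specialize (H1 x Hs).
  rewrite dotd_scal.
  replace (c * f x - c * f E - c * dotd l x E) with (c * (f x - f E - dotd l x E)) by ring.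
  rewrite Rabs_mult. pose proof (Rabs_pos c). pose proof (sdist_nonneg x E).
  apply Rle_trans with (Rabs c * (eps / (Rabs c + 1) * sdist x E)).
  { apply Rmult_le_compat_l; auto. }
  apply Rle_trans with ((Rabs c + 1) * (eps / (Rabs c + 1) * sdist x E)).
  { apply Rmult_le_compat_r; [|lra]. apply Rmult_le_pos; auto.
    apply Rlt_le, Rdiv_lt_0_compat; lra. }
  right. field. lra.
Qed.

Lemma lin_mult f g E l m : lin f E l -> lin g E m ->
  lin (fun x => f x * g x) E (addS (scalS (f E) m) (scalS (g E) l)).
Proof.
  intros Hf Hg eps He.
  destruct (lin_bound _ _ _ Hf) as [df [Hdf Bf]].
  destruct (lin_bound _ _ _ Hg) as [dg [Hdg Bg]].
  set (Lf := nrm1 l + 1) in *. set (Lg := nrm1 m + 1) in *.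
  assert (HLf : 0 < Lf) by (pose proof (nrm1_nonneg l); unfold Lf; lra).
  assert (HLg : 0 < Lg) by (pose proof (nrm1_nonneg m); unfold Lg; lra).
  set (M := Rabs (f E) + Rabs (g E) + 1).
  assert (HM : 0 < M) by (pose proof (Rabs_pos (f E)); pose proof (Rabs_pos (g E)); unfold M; lra).
  destruct (Hf (eps / (3 * M))) as [d1 [Hd1 H1]]. { apply Rdiv_lt_0_compat; lra. }
  destruct (Hg (eps / (3 * M))) as [d2 [Hd2 H2]]. { apply Rdiv_lt_0_compat; lra. }
  set (d3 := eps / (3 * (Lf * Lg))).
  assert (Hd3 : 0 < d3) by (apply Rdiv_lt_0_compat; [lra| apply Rmult_lt_0_compat; [lra| nra]]).
  exists (Rmin (Rmin df dg) (Rmin (Rmin d1 d2) d3)).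
  split. { repeat apply Rmin_pos; auto. }
  intros x Hs.
  assert (s1 : sdist x E < df) by (eapply Rlt_le_trans; [apply Hs|]; eapply Rle_trans; [apply Rmin_l|apply Rmin_l]).
  assert (s2 : sdist x E < dg) by (eapply Rlt_le_trans; [apply Hs|]; eapply Rle_trans; [apply Rmin_l|apply Rmin_r]).
  assert (s3 : sdist x E < d1) by (eapply Rlt_le_trans; [apply Hs|]; eapply Rle_trans; [apply Rmin_r|]; eapply Rle_trans; [apply Rmin_l|apply Rmin_l]).
  assert (s4 : sdist x E < d2) by (eapply Rlt_le_trans; [apply Hs|]; eapply Rle_trans; [apply Rmin_r|]; eapply Rle_trans; [apply Rmin_l|apply Rmin_r]).
  assert (s5 : sdist x E < d3) by (eapply Rlt_le_trans; [apply Hs|]; eapply Rle_trans; [apply Rmin_r|apply Rmin_r]).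
  specialize (Bf x s1). specialize (Bg x s2). specialize (H1 x s3). specialize (H2 x s4).
  rewrite dotd_add, !dotd_scal.
  set (s := sdist x E) in *.
  assert (Hs0 : 0 <= s) by apply sdist_nonneg.
  replace (f x * g x - f E * g E - (f E * dotd m x E + g E * dotd l x E)) with
    (f E * (g x - g E - dotd m x E) + g E * (f x - f E - dotd l x E) + (f x - f E) * (g x - g E)) by ring.
  set (rg := g x - g E - dotd m x E) in *. set (rf := f x - f E - dotd l x E) in *.
  set (F := f x - f E) in *. set (G := g x - g E) in *.
  pose proof (Rabs_pos (f E)). pose proof (Rabs_pos (g E)).
  assert (T1 : Rabs (f E * rg) <= Rabs (f E) * (eps / (3 * M) * s)) by (apply abs_mul_le; auto).
  assert (T2 : Rabs (g E * rf) <= Rabs (g E) * (eps / (3 * M) * s)) by (apply abs_mul_le; auto).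
  assert (T3 : Rabs (F * G) <= (Lf * s) * (Lg * s)).
  { rewrite Rabs_mult. apply Rmult_le_compat; auto; apply Rabs_pos. }
  assert (E1 : (Rabs (f E) + Rabs (g E)) * (eps / (3 * M) * s) <= eps / 3 * s).
  { apply Rle_trans with (M * (eps / (3 * M) * s)).
    - apply Rmult_le_compat_r; [|unfold M; lra]. apply Rmult_le_pos; auto.
      apply Rlt_le, Rdiv_lt_0_compat; lra.
    - right. field. lra. }
  assert (E2 : (Lf * s) * (Lg * s) <= eps / 3 * s).
  { replace ((Lf * s) * (Lg * s)) with ((Lf * Lg * s) * s) by ring.
    apply Rmult_le_compat_r; auto.
    apply Rle_trans with (Lf * Lg * d3). { apply Rmult_le_compat_l; [nra|lra]. }
    right. unfold d3. field. nra. }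
  eapply Rle_trans; [apply Rabs_triang|].
  eapply Rle_trans; [apply Rplus_le_compat_r; apply Rabs_triang|].
  nra.
Qed.


Lemma dpl_bound h z h' : derivable_pt_lim h z h' ->
  forall eps, 0 < eps -> exists d, 0 < d /\ forall u, Rabs u < d ->
   Rabs (h (z + u) - h z - h' * u) <= eps * Rabs u.
Proof.
  intros H eps He. destruct (H eps He) as [d Hd].
  exists d. split; [apply cond_pos|]. intros u Hu.
  destruct (Req_dec u 0) as [->|Hn].
  { rewrite Rplus_0_r. replace (h z - h z - h' * 0) with 0 by ring. rewrite Rabs_R0; lra. }
  specialize (Hd u Hn Hu).
  replace (h (z + u) - h z - h' * u) with (((h (z + u) - h z) / u - h') * u) by (field; auto).
  rewrite Rabs_mult. apply Rmult_le_compat_r; [apply Rabs_pos| lra].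
Qed.

Lemma lin_comp h h' g E l : derivable_pt_lim h (g E) h' -> lin g E l ->
  lin (fun x => h (g x)) E (scalS h' l).
Proof.
  intros Hh Hg eps He.
  destruct (lin_bound _ _ _ Hg) as [db [Hdb Bg]].
  set (L := nrm1 l + 1) in *.
  assert (HL : 0 < L) by (pose proof (nrm1_nonneg l); unfold L; lra).
  destruct (dpl_bound _ _ _ Hh (eps / (2 * L))) as [dh [Hdh Bh]].
  { apply Rdiv_lt_0_compat; lra. }
  set (M := Rabs h' + 1).
  assert (HM : 0 < M) by (pose proof (Rabs_pos h'); unfold M; lra).
  destruct (Hg (eps / (2 * M))) as [d1 [Hd1 H1]]. { apply Rdiv_lt_0_compat; lra. }
  exists (Rmin (Rmin db d1) (dh / L)).
  split. { repeat apply Rmin_pos; auto. apply Rdiv_lt_0_compat; lra. }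
  intros x Hs.
  assert (s1 : sdist x E < db) by (eapply Rlt_le_trans; [apply Hs|]; eapply Rle_trans; [apply Rmin_l|apply Rmin_l]).
  assert (s2 : sdist x E < d1) by (eapply Rlt_le_trans; [apply Hs|]; eapply Rle_trans; [apply Rmin_l|apply Rmin_r]).
  assert (s3 : sdist x E < dh / L) by (eapply Rlt_le_trans; [apply Hs|]; apply Rmin_r).
  specialize (Bg x s1). specialize (H1 x s2).
  set (s := sdist x E) in *. assert (Hs0 : 0 <= s) by apply sdist_nonneg.
  assert (Hu : Rabs (g x - g E) < dh).
  { eapply Rle_lt_trans; [apply Bg|]. apply Rlt_le_trans with (L * (dh / L)).
    apply Rmult_lt_compat_l; auto. right; field; lra. }
  specialize (Bh _ Hu). replace (g E + (g x - g E)) with (g x) in Bh by ring.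
  rewrite dotd_scal.
  replace (h (g x) - h (g E) - h' * dotd l x E) with
    ((h (g x) - h (g E) - h' * (g x - g E)) + h' * (g x - g E - dotd l x E)) by ring.
  eapply Rle_trans; [apply Rabs_triang|].
  assert (T2 : Rabs (h' * (g x - g E - dotd l x E)) <= Rabs h' * (eps / (2 * M) * s)) by (apply abs_mul_le; auto).
  assert (T1 : eps / (2 * L) * Rabs (g x - g E) <= eps / (2 * L) * (L * s)).
  { apply Rmult_le_compat_l; auto. apply Rlt_le, Rdiv_lt_0_compat; lra. }
  assert (E1 : eps / (2 * L) * (L * s) = eps / 2 * s) by (field; lra).
  assert (E2 : Rabs h' * (eps / (2 * M) * s) <= eps / 2 * s).
  { apply Rle_trans with (M * (eps / (2 * M) * s)).
    - apply Rmult_le_compat_r; [|unfold M; lra]. apply Rmult_le_pos; auto.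
      apply Rlt_le, Rdiv_lt_0_compat; lra.
    - right. field. lra. }
  lra.
Qed.

Lemma dpl_G a A : A + a <> 0 ->
  derivable_pt_lim (fun z => z / (z + a)) A (a / (A + a)^2).
Proof.
  intros H. apply is_derive_Reals. auto_derive; [auto|]. field. auto.
Qed.

Lemma dpl_H b A : 1 + b * A <> 0 ->
  derivable_pt_lim (fun z => 1 / (1 + b * z)) A (- b / (1 + b * A)^2).
Proof.
  intros H. apply is_derive_Reals. auto_derive; [auto|]. field. auto.
Qed.


Definition JV1 p E := let V1 := sV1 E in let A1 := sA1 E in let V2 := sV2 E in let A2 := sA2 E in
  St (rV p * (A1 / (A1 + a1 p)) * (1 - 2 * V1 / KV1 p) - dVp12 p * (1 / (1 + b1 p * A1)) - muV1 p)
     (rV p * (a1 p / (A1 + a1 p)^2) * V1 * (1 - V1 / KV1 p) - dVp12 p * (- b1 p / (1 + b1 p * A1)^2) * V1)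
     (dVp21 p * (1 / (1 + b2 p * A2)))
     (dVp21 p * (- b2 p / (1 + b2 p * A2)^2) * V2).
Definition JV2 p E := let V1 := sV1 E in let A1 := sA1 E in let V2 := sV2 E in let A2 := sA2 E in
  St (dVp12 p * (1 / (1 + b1 p * A1)))
     (dVp12 p * (- b1 p / (1 + b1 p * A1)^2) * V1)
     (rV p * (A2 / (A2 + a2 p)) * (1 - 2 * V2 / KV2 p) - dVp21 p * (1 / (1 + b2 p * A2)) - muV2 p)
     (rV p * (a2 p / (A2 + a2 p)^2) * V2 * (1 - V2 / KV2 p) - dVp21 p * (- b2 p / (1 + b2 p * A2)^2) * V2).
Definition JA1 p E :=
  St 0 (rA p * (1 - 2 * sA1 E / KAp1 p) - dAp12 p - muA1 p) 0 (dAp21 p).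
Definition JA2 p E :=
  St 0 (dAp12 p) 0 (rA p * (1 - 2 * sA2 E / KAp2 p) - dAp21 p - muA2 p).

Lemma lin_fV1 p E : sA1 E + a1 p <> 0 -> 1 + b1 p * sA1 E <> 0 -> 1 + b2 p * sA2 E <> 0 ->
  KV1 p <> 0 -> lin (fV1 p) E (JV1 p E).
Proof.
  intros Ha Hb1 Hb2 HK.
  pose proof (lin_comp _ _ _ _ _ (dpl_G (a1 p) (sA1 E) Ha) (lin_A1 E)) as G1.
  pose proof (lin_comp _ _ _ _ _ (dpl_H (b1 p) (sA1 E) Hb1) (lin_A1 E)) as H1.
  pose proof (lin_comp _ _ _ _ _ (dpl_H (b2 p) (sA2 E) Hb2) (lin_A2 E)) as H2.
  pose proof (lin_plus _ _ _ _ _ (lin_const 1 E) (lin_scal (- / KV1 p) _ _ _ (lin_V1 E))) as Lg.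
  pose proof (lin_mult _ _ _ _ _ (lin_mult _ _ _ _ _ (lin_scal (rV p) _ _ _ G1) (lin_V1 E)) Lg) as T1.
  pose proof (lin_mult _ _ _ _ _ (lin_scal (- dVp12 p) _ _ _ H1) (lin_V1 E)) as T2.
  pose proof (lin_mult _ _ _ _ _ (lin_scal (dVp21 p) _ _ _ H2) (lin_V2 E)) as T3.
  pose proof (lin_scal (- muV1 p) _ _ _ (lin_V1 E)) as T4.
  pose proof (lin_plus _ _ _ _ _ (lin_plus _ _ _ _ _ (lin_plus _ _ _ _ _ T1 T2) T3) T4) as T.
  eapply lin_ext; [exact T | | | | |].
  - intros x. unfold fV1. cbv beta. unfold Rdiv. ring.
  - unfold JV1, addS, scalS; cbn [sV1 sA1 sV2 sA2]. field. auto.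
  - unfold JV1, addS, scalS; cbn [sV1 sA1 sV2 sA2]. field. auto.
  - unfold JV1, addS, scalS; cbn [sV1 sA1 sV2 sA2]. field. auto.
  - unfold JV1, addS, scalS; cbn [sV1 sA1 sV2 sA2]. field. auto.
Qed.

Lemma lin_fV2 p E : sA2 E + a2 p <> 0 -> 1 + b1 p * sA1 E <> 0 -> 1 + b2 p * sA2 E <> 0 ->
  KV2 p <> 0 -> lin (fV2 p) E (JV2 p E).
Proof.
  intros Ha Hb1 Hb2 HK.
  pose proof (lin_comp _ _ _ _ _ (dpl_G (a2 p) (sA2 E) Ha) (lin_A2 E)) as G2.
  pose proof (lin_comp _ _ _ _ _ (dpl_H (b1 p) (sA1 E) Hb1) (lin_A1 E)) as H1.
  pose proof (lin_comp _ _ _ _ _ (dpl_H (b2 p) (sA2 E) Hb2) (lin_A2 E)) as H2.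
  pose proof (lin_plus _ _ _ _ _ (lin_const 1 E) (lin_scal (- / KV2 p) _ _ _ (lin_V2 E))) as Lg.
  pose proof (lin_mult _ _ _ _ _ (lin_mult _ _ _ _ _ (lin_scal (rV p) _ _ _ G2) (lin_V2 E)) Lg) as T1.
  pose proof (lin_mult _ _ _ _ _ (lin_scal (- dVp21 p) _ _ _ H2) (lin_V2 E)) as T2.
  pose proof (lin_mult _ _ _ _ _ (lin_scal (dVp12 p) _ _ _ H1) (lin_V1 E)) as T3.
  pose proof (lin_scal (- muV2 p) _ _ _ (lin_V2 E)) as T4.
  pose proof (lin_plus _ _ _ _ _ (lin_plus _ _ _ _ _ (lin_plus _ _ _ _ _ T1 T2) T3) T4) as T.
  eapply lin_ext; [exact T | | | | |].
  - intros x. unfold fV2. cbv beta. unfold Rdiv. ring.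
  - unfold JV2, addS, scalS; cbn [sV1 sA1 sV2 sA2]. field. auto.
  - unfold JV2, addS, scalS; cbn [sV1 sA1 sV2 sA2]. field. auto.
  - unfold JV2, addS, scalS; cbn [sV1 sA1 sV2 sA2]. field. auto.
  - unfold JV2, addS, scalS; cbn [sV1 sA1 sV2 sA2]. field. auto.
Qed.

Lemma lin_fA1 p E : KAp1 p <> 0 -> lin (fA1 p) E (JA1 p E).
Proof.
  intros HK.
  pose proof (lin_plus _ _ _ _ _ (lin_const 1 E) (lin_scal (- / KAp1 p) _ _ _ (lin_A1 E))) as Lg.
  pose proof (lin_mult _ _ _ _ _ (lin_scal (rA p) _ _ _ (lin_A1 E)) Lg) as T1.
  pose proof (lin_scal (- dAp12 p) _ _ _ (lin_A1 E)) as T2.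
  pose proof (lin_scal (dAp21 p) _ _ _ (lin_A2 E)) as T3.
  pose proof (lin_scal (- muA1 p) _ _ _ (lin_A1 E)) as T4.
  pose proof (lin_plus _ _ _ _ _ (lin_plus _ _ _ _ _ (lin_plus _ _ _ _ _ T1 T2) T3) T4) as T.
  eapply lin_ext; [exact T | | | | |].
  - intros x. unfold fA1. cbv beta. unfold Rdiv. ring.
  - unfold JA1, addS, scalS; cbn [sV1 sA1 sV2 sA2]. ring.
  - unfold JA1, addS, scalS; cbn [sV1 sA1 sV2 sA2]. field. auto.
  - unfold JA1, addS, scalS; cbn [sV1 sA1 sV2 sA2]. ring.
  - unfold JA1, addS, scalS; cbn [sV1 sA1 sV2 sA2]. ring.
Qed.

Lemma lin_fA2 p E : KAp2 p <> 0 -> lin (fA2 p) E (JA2 p E).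
Proof.
  intros HK.
  pose proof (lin_plus _ _ _ _ _ (lin_const 1 E) (lin_scal (- / KAp2 p) _ _ _ (lin_A2 E))) as Lg.
  pose proof (lin_mult _ _ _ _ _ (lin_scal (rA p) _ _ _ (lin_A2 E)) Lg) as T1.
  pose proof (lin_scal (- dAp21 p) _ _ _ (lin_A2 E)) as T2.
  pose proof (lin_scal (dAp12 p) _ _ _ (lin_A1 E)) as T3.
  pose proof (lin_scal (- muA2 p) _ _ _ (lin_A2 E)) as T4.
  pose proof (lin_plus _ _ _ _ _ (lin_plus _ _ _ _ _ (lin_plus _ _ _ _ _ T1 T2) T3) T4) as T.
  eapply lin_ext; [exact T | | | | |].
  - intros x. unfold fA2. cbv beta. unfold Rdiv. ring.
  - unfold JA2, addS, scalS; cbn [sV1 sA1 sV2 sA2]. ring.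
  - unfold JA2, addS, scalS; cbn [sV1 sA1 sV2 sA2]. ring.
  - unfold JA2, addS, scalS; cbn [sV1 sA1 sV2 sA2]. ring.
  - unfold JA2, addS, scalS; cbn [sV1 sA1 sV2 sA2]. field. auto.
Qed.


Lemma cont_of_der h t l : is_derive h t l -> continuity_pt h t.
Proof. intros H. apply continuity_pt_filterlim. apply (ex_derive_continuous h t). exists l; auto. Qed.

Lemma cont_eps h t : continuity_pt h t -> forall e, 0 < e -> exists d, 0 < d /\
  forall u, Rabs (u - t) < d -> Rabs (h u - h t) < e.
Proof.
  intros H e He. unfold continuity_pt, continue_in, limit1_in, limit_in in H.
  destruct (H e He) as [d [Hd Hu]]. exists d. split; auto. intros u Hut.
  destruct (Req_dec u t) as [->|Hn].
  { replace (h t - h t) with 0 by ring. rewrite Rabs_R0; auto. }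
  apply (Hu u). split. { split; [exact I| auto]. } exact Hut.
Qed.

Lemma mono_dec (h dh : R -> R) a b : a <= b ->
  (forall t, a <= t <= b -> is_derive h t (dh t) /\ dh t <= 0) -> h b <= h a.
Proof.
  intros Hab H.
  destruct (MVT_gen h a b dh) as [c [Hc Heq]].
  - intros x Hx. rewrite Rmin_left in Hx by auto. rewrite Rmax_right in Hx by auto.
    apply H; lra.
  - intros x Hx. rewrite Rmin_left in Hx by auto. rewrite Rmax_right in Hx by auto.
    destruct (H x) as [Hd _]; [lra|]. eapply cont_of_der; eauto.
  - rewrite Rmin_left in Hc by auto. rewrite Rmax_right in Hc by auto.
    destruct (H c Hc) as [_ Hn]. nra.
Qed.

Lemma traj (w dw s : R -> R) r c mlow :
  0 < r -> 0 < c -> 0 < mlow ->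
  (forall t, 0 <= t -> is_derive w t (dw t)) ->
  (forall t, 0 <= t -> s t < r -> dw t <= - c * w t) ->
  (forall t, 0 <= t -> mlow * (s t)^2 <= w t) ->
  (forall t, 0 <= s t) ->
  w 0 < mlow * r^2 ->
  forall t, 0 <= t -> w t < mlow * r^2.
Proof.
  intros Hr Hc Hm Hd Hdec Hlow Hs0 Hw0.
  set (B := mlow * r^2) in *.
  assert (wpos : forall t, 0 <= t -> 0 <= w t).
  { intros t Ht. specialize (Hlow t Ht). pose proof (Hs0 t). nra. }
  assert (sr : forall t, 0 <= t -> w t < B -> s t < r).
  { intros t Ht Hwt. specialize (Hlow t Ht). pose proof (Hs0 t). unfold B in Hwt.
    destruct (Rlt_dec (s t) r) as [|Hn]; auto. exfalso. assert (r^2 <= (s t)^2) by nra. nra. }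
  intros t1 Ht1. destruct (Rlt_dec (w t1) B) as [|Hn]; auto. exfalso.
  set (S := fun u => 0 <= u /\ forall v, 0 <= v <= u -> w v < B).
  assert (S0 : S 0). { split; [lra|]. intros v Hv. replace v with 0 by lra. auto. }
  assert (Sb : bound S).
  { exists t1. intros u [Hu Hv]. destruct (Rle_dec u t1) as [|Hut]; auto.
    exfalso. apply Hn. apply Hv. lra. }
  destruct (completeness S Sb (ex_intro _ 0 S0)) as [tau [Hub Hlub]].
  assert (Htau0 : 0 <= tau) by (apply Hub; auto).
  assert (F1 : forall v, 0 <= v < tau -> w v < B).
  { intros v Hv. destruct (Rlt_dec (w v) B) as [|Hnv]; auto. exfalso.
    assert (tau <= v).
    { apply Hlub. intros u [Hu Hu2]. destruct (Rle_dec u v) as [|Huv]; auto.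
      exfalso. apply Hnv. apply Hu2. lra. }
    lra. }
  assert (F2 : forall v, 0 <= v < tau -> w v <= w 0).
  { intros v Hv. apply (mono_dec w dw 0 v); [lra|]. intros t Ht.
    split; [apply Hd; lra|]. assert (w t < B) by (apply F1; lra).
    pose proof (Hdec t (proj1 Ht) (sr t (proj1 Ht) H)). pose proof (wpos t (proj1 Ht)). nra. }
  assert (Ctau : continuity_pt w tau) by (eapply cont_of_der; apply Hd; auto).
  assert (F3 : w tau <= w 0).
  { destruct (Rle_dec (w tau) (w 0)) as [|Hgt]; auto. exfalso.
    destruct (Req_dec tau 0) as [Hz|Hnz]. { rewrite Hz in Hgt. lra. }
    destruct (cont_eps w tau Ctau (w tau - w 0)) as [d [Hdp Hdd]]; [lra|].
    set (v := Rmax 0 (tau - d/2)).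
    assert (Hv1 : 0 <= v) by apply Rmax_l.
    assert (Hv2 : v < tau). { unfold v. apply Rmax_lub_lt; lra. }
    assert (Hv3 : Rabs (v - tau) < d).
    { rewrite Rabs_left by lra. assert (tau - d/2 <= v) by apply Rmax_r. lra. }
    specialize (Hdd v Hv3). specialize (F2 v (conj Hv1 Hv2)).
    apply Rabs_def2 in Hdd. lra. }
  destruct (cont_eps w tau Ctau (B - w tau)) as [d [Hdp Hdd]]; [lra|].
  assert (Su : S (tau + d/2)).
  { split; [lra|]. intros v Hv. destruct (Rlt_dec v tau) as [Hl|Hge].
    - apply F1; lra.
    - assert (Rabs (v - tau) < d) by (rewrite Rabs_right by lra; lra).
      specialize (Hdd v H). apply Rabs_def2 in Hdd. lra. }
  specialize (Hub _ Su). lra.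
Qed.

Lemma decay (w dw : R -> R) c :
  (forall t, 0 <= t -> is_derive w t (dw t)) ->
  (forall t, 0 <= t -> dw t <= - c * w t) ->
  forall t, 0 <= t -> w t * exp (c * t) <= w 0.
Proof.
  intros Hd Hdec t Ht.
  set (h := fun u => w u * exp (c * u)).
  change (h t <= w 0). replace (w 0) with (h 0) by (unfold h; rewrite Rmult_0_r, exp_0; ring).
  apply (mono_dec h (fun u => dw u * exp (c * u) + w u * (c * exp (c * u))) 0 t); [lra|].
  intros u Hu. split.
  - assert (He : is_derive (fun u => exp (c * u)) u (c * exp (c * u))).
    { auto_derive; auto. ring. }
    pose proof (is_derive_mult w _ u _ _ (Hd u (proj1 Hu)) He (fun a b => Rmult_comm a b)) as HH.
    exact HH.
  - pose proof (Hdec u (proj1 Hu)). pose proof (exp_pos (c * u)). nra.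
Qed.


Definition Wq (q E x : state) :=
  sV1 q * (sV1 x - sV1 E)^2 + sA1 q * (sA1 x - sA1 E)^2
  + sV2 q * (sV2 x - sV2 E)^2 + sA2 q * (sA2 x - sA2 E)^2.
Definition Fq p (q E x : state) :=
  sV1 q * (sV1 x - sV1 E) * fV1 p x + sA1 q * (sA1 x - sA1 E) * fA1 p x
  + sV2 q * (sV2 x - sV2 E) * fV2 p x + sA2 q * (sA2 x - sA2 E) * fA2 p x.
Definition Lq (q E x l1 l2 l3 l4 : state) :=
  sV1 q * (sV1 x - sV1 E) * dotd l1 x E + sA1 q * (sA1 x - sA1 E) * dotd l2 x E
  + sV2 q * (sV2 x - sV2 E) * dotd l3 x E + sA2 q * (sA2 x - sA2 E) * dotd l4 x E.

Lemma err_term q y rho s eps : 0 < q -> Rabs y <= s -> Rabs rho <= eps * s ->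
  q * y * rho <= q * (eps * s^2).
Proof.
  intros Hq Hy Hr.
  assert (q * y * rho <= q * (Rabs y * Rabs rho)).
  { rewrite <- Rabs_mult. rewrite Rmult_assoc. apply Rmult_le_compat_l; [lra|]. apply Rle_abs. }
  assert (Rabs y * Rabs rho <= s * (eps * s)).
  { apply Rmult_le_compat; auto; apply Rabs_pos. }
  nra.
Qed.

Lemma W_bounds q E x : 0 < sV1 q -> 0 < sA1 q -> 0 < sV2 q -> 0 < sA2 q ->
  let qmin := Rmin (Rmin (sV1 q) (sA1 q)) (Rmin (sV2 q) (sA2 q)) in
  let Q := sV1 q + sA1 q + sV2 q + sA2 q in
  qmin * ssq E x <= Wq q E x /\ Wq q E x <= Q * ssq E x.
Proof.
  intros H1 H2 H3 H4 qmin Q.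
  assert (m1 : qmin <= sV1 q) by (unfold qmin; eapply Rle_trans; apply Rmin_l).
  assert (m2 : qmin <= sA1 q) by (unfold qmin; eapply Rle_trans; [apply Rmin_l|apply Rmin_r]).
  assert (m3 : qmin <= sV2 q) by (unfold qmin; eapply Rle_trans; [apply Rmin_r|apply Rmin_l]).
  assert (m4 : qmin <= sA2 q) by (unfold qmin; eapply Rle_trans; [apply Rmin_r|apply Rmin_r]).
  unfold Wq, ssq, Q.
  pose proof (pow2_ge_0 (sV1 x - sV1 E)). pose proof (pow2_ge_0 (sA1 x - sA1 E)).
  pose proof (pow2_ge_0 (sV2 x - sV2 E)). pose proof (pow2_ge_0 (sA2 x - sA2 E)).
  split; nra.
Qed.

Lemma local_decrease p E q l1 l2 l3 l4 k :
  equilibrium p E -> 0 < sV1 q -> 0 < sA1 q -> 0 < sV2 q -> 0 < sA2 q -> 0 < k ->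
  lin (fV1 p) E l1 -> lin (fA1 p) E l2 -> lin (fV2 p) E l3 -> lin (fA2 p) E l4 ->
  (forall x, Lq q E x l1 l2 l3 l4 <= - k * ssq E x) ->
  exists r c, 0 < r /\ 0 < c /\ forall x, sdist x E < r ->
    2 * Fq p q E x <= - c * Wq q E x.
Proof.
  intros [e1 [e2 [e3 e4]]] q1 q2 q3 q4 Hk L1 L2 L3 L4 HL.
  set (Q := sV1 q + sA1 q + sV2 q + sA2 q).
  assert (HQ : 0 < Q) by (unfold Q; lra).
  set (eps0 := k / (2 * Q)).
  assert (He0 : 0 < eps0) by (apply Rdiv_lt_0_compat; lra).
  destruct (L1 eps0 He0) as [d1 [Hd1 R1]]. destruct (L2 eps0 He0) as [d2 [Hd2 R2]].
  destruct (L3 eps0 He0) as [d3 [Hd3 R3]]. destruct (L4 eps0 He0) as [d4 [Hd4 R4]].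
  exists (Rmin (Rmin d1 d2) (Rmin d3 d4)), (k / Q).
  split. { repeat apply Rmin_pos; auto. }
  split. { apply Rdiv_lt_0_compat; lra. }
  intros x Hs.
  assert (s1 : sdist x E < d1) by (eapply Rlt_le_trans; [apply Hs|]; eapply Rle_trans; apply Rmin_l).
  assert (s2 : sdist x E < d2) by (eapply Rlt_le_trans; [apply Hs|]; eapply Rle_trans; [apply Rmin_l|apply Rmin_r]).
  assert (s3 : sdist x E < d3) by (eapply Rlt_le_trans; [apply Hs|]; eapply Rle_trans; [apply Rmin_r|apply Rmin_l]).
  assert (s4 : sdist x E < d4) by (eapply Rlt_le_trans; [apply Hs|]; eapply Rle_trans; [apply Rmin_r|apply Rmin_r]).
  specialize (R1 x s1). specialize (R2 x s2). specialize (R3 x s3). specialize (R4 x s4).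
  rewrite e1 in R1. rewrite e2 in R2. rewrite e3 in R3. rewrite e4 in R4.
  set (s := sdist x E) in *.
  pose proof (err_term _ _ _ _ _ q1 (sdist_ge1 x E) R1) as T1.
  pose proof (err_term _ _ _ _ _ q2 (sdist_ge2 x E) R2) as T2.
  pose proof (err_term _ _ _ _ _ q3 (sdist_ge3 x E) R3) as T3.
  pose proof (err_term _ _ _ _ _ q4 (sdist_ge4 x E) R4) as T4.
  fold s in T1, T2, T3, T4.
  specialize (HL x). pose proof (sdist_sq_le x E) as Hsq. fold s in Hsq.
  destruct (W_bounds q E x q1 q2 q3 q4) as [_ HW]. fold Q in HW.
  assert (HF : Fq p q E x = Lq q E x l1 l2 l3 l4
     + sV1 q * (sV1 x - sV1 E) * (fV1 p x - 0 - dotd l1 x E)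
     + sA1 q * (sA1 x - sA1 E) * (fA1 p x - 0 - dotd l2 x E)
     + sV2 q * (sV2 x - sV2 E) * (fV2 p x - 0 - dotd l3 x E)
     + sA2 q * (sA2 x - sA2 E) * (fA2 p x - 0 - dotd l4 x E)).
  { unfold Fq, Lq. ring. }
  rewrite HF.
  assert (Hsum : sV1 q * (eps0 * s^2) + sA1 q * (eps0 * s^2) + sV2 q * (eps0 * s^2) + sA2 q * (eps0 * s^2)
     = k / 2 * s^2) by (unfold eps0, Q in *; field; lra).
  assert (HW2 : - k * ssq E x <= - (k / Q) * Wq q E x).
  { apply Rle_trans with (- (k / Q) * (Q * ssq E x)).
    - right. field. lra.
    - assert (0 <= k / Q) by (apply Rlt_le, Rdiv_lt_0_compat; lra). nra. }
  assert (k * s^2 <= k * ssq E x) by (apply Rmult_le_compat_l; lra).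
  lra.
Qed.

Lemma der_change (f : R -> R) (t l l' : R) : is_derive f t l -> l = l' -> is_derive f t l'.
Proof. intros H ->; auto. Qed.

Lemma sq_der (u : R -> R) t u' a e : is_derive u t u' ->
  is_derive (fun s => a * (u s - e)^2) t (2 * a * (u t - e) * u').
Proof.
  intros H.
  assert (Hf : is_derive (fun z => a * (z - e)^2) (u t) (2 * a * (u t - e))).
  { auto_derive; auto. ring. }
  eapply der_change. { apply (is_derive_comp (fun z => a * (z - e)^2) u t _ _ Hf H). }
  simpl. unfold scal; simpl. unfold mult; simpl. ring.
Qed.

Lemma der_W p q E x t : solution p x -> 0 <= t ->
  is_derive (fun s => Wq q E (x s)) t (2 * Fq p q E (x t)).
Proof.
  intros Hx Ht. destruct (Hx t Ht) as [D1 [D2 [D3 D4]]].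
  pose proof (sq_der _ _ _ (sV1 q) (sV1 E) D1) as S1.
  pose proof (sq_der _ _ _ (sA1 q) (sA1 E) D2) as S2.
  pose proof (sq_der _ _ _ (sV2 q) (sV2 E) D3) as S3.
  pose proof (sq_der _ _ _ (sA2 q) (sA2 E) D4) as S4.
  pose proof (is_derive_plus _ _ _ _ _ (is_derive_plus _ _ _ _ _ (is_derive_plus _ _ _ _ _ S1 S2) S3) S4) as S.
  eapply der_change; [exact S|]. unfold Fq, plus; simpl. ring.
Qed.


Lemma LAS_lyap p E q l1 l2 l3 l4 k :
  equilibrium p E -> 0 < sV1 q -> 0 < sA1 q -> 0 < sV2 q -> 0 < sA2 q -> 0 < k ->
  lin (fV1 p) E l1 -> lin (fA1 p) E l2 -> lin (fV2 p) E l3 -> lin (fA2 p) E l4 ->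
  (forall x, Lq q E x l1 l2 l3 l4 <= - k * ssq E x) ->
  LAS p E.
Proof.
  intros Heq q1 q2 q3 q4 Hk L1 L2 L3 L4 HL.
  destruct (local_decrease p E q l1 l2 l3 l4 k Heq q1 q2 q3 q4 Hk L1 L2 L3 L4 HL)
    as [r [c [Hr [Hc Hdec]]]].
  set (qmin := Rmin (Rmin (sV1 q) (sA1 q)) (Rmin (sV2 q) (sA2 q))).
  set (Q := sV1 q + sA1 q + sV2 q + sA2 q).
  assert (Hqmin : 0 < qmin) by (unfold qmin; repeat apply Rmin_pos; auto).
  assert (HQ : 0 < Q) by (unfold Q; lra).
  assert (Wlow : forall x, qmin * (sdist x E)^2 <= Wq q E x).
  { intros x. destruct (W_bounds q E x q1 q2 q3 q4) as [A _]. fold qmin in A.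
    pose proof (sdist_sq_le x E). nra. }
  assert (Whigh : forall x, Wq q E x <= 4 * Q * (sdist x E)^2).
  { intros x. destruct (W_bounds q E x q1 q2 q3 q4) as [_ A]. fold Q in A.
    pose proof (ssq_le x E). nra. }
  set (b := 4 * Q). set (th := qmin / (qmin + b)).
  assert (Hb : 0 < b) by (unfold b; lra).
  assert (Hth0 : 0 < th) by (unfold th; apply Rdiv_lt_0_compat; lra).
  assert (Hth1 : th < 1). { unfold th. apply Rlt_div_l; lra. }
  assert (Hthb : th * b < qmin).
  { unfold th. replace (qmin / (qmin + b) * b) with (qmin * (b / (qmin + b))) by (field; lra).
    assert (b / (qmin + b) < 1) by (apply Rlt_div_l; lra). nra. }
  assert (Main : forall rho, 0 < rho -> rho <= r -> forall x, solution p x ->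
            sdist (x 0) E < rho * th -> forall t, 0 <= t -> Wq q E (x t) < qmin * rho^2).
  { intros rho Hrho Hrr x Hx H0.
    apply (traj (fun t => Wq q E (x t)) (fun t => 2 * Fq p q E (x t)) (fun t => sdist (x t) E) rho c qmin); auto.
    - intros t Ht. apply der_W; auto.
    - intros t Ht Hst. apply Hdec. lra.
    - intros t. apply sdist_nonneg.
    - eapply Rle_lt_trans; [apply Whigh|]. fold b.
      pose proof (sdist_nonneg (x 0) E).
      assert ((sdist (x 0) E)^2 <= (rho * th)^2) by nra.
      assert (b * (rho * th)^2 < qmin * rho^2).
      { replace (b * (rho * th)^2) with (rho^2 * (th * (th * b))) by ring.
        assert (th * (th * b) <= 1 * (th * b)) by (apply Rmult_le_compat_r; nra).
        assert (th * (th * b) < qmin) by lra. pose proof (pow2_gt_0 rho). nra. }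
      nra. }
  assert (sbound : forall rho x, 0 < rho -> Wq q E x < qmin * rho^2 -> sdist x E < rho).
  { intros rho x Hrho HW. pose proof (Wlow x). pose proof (sdist_nonneg x E).
    destruct (Rlt_dec (sdist x E) rho) as [|Hn]; auto. exfalso.
    assert (rho^2 <= (sdist x E)^2) by nra. nra. }
  split; [auto|split].
  - intros eps Heps. set (rho := Rmin r eps).
    assert (Hrho : 0 < rho) by (apply Rmin_pos; auto).
    exists (rho * th). split; [nra|].
    intros x Hx _ H0 t Ht.
    pose proof (Main rho Hrho (Rmin_l _ _) x Hx H0 t Ht).
    eapply Rlt_le_trans; [eapply sbound; eauto|]. apply Rmin_r.
  - exists (r * th). split; [nra|]. intros x Hx _ H0.
    assert (Hin : forall t, 0 <= t -> sdist (x t) E < r).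
    { intros t Ht. eapply sbound; eauto. apply (Main r Hr (Rle_refl r) x Hx H0 t Ht). }
    pose proof (decay (fun t => Wq q E (x t)) (fun t => 2 * Fq p q E (x t)) c
      (fun t Ht => der_W p q E x t Hx Ht) (fun t Ht => Hdec _ (Hin t Ht))) as Hd.
    simpl in Hd.
    set (w0 := Wq q E (x 0)) in *.
    assert (Hw0 : 0 <= w0) by (pose proof (Wlow (x 0)); pose proof (pow2_ge_0 (sdist (x 0) E)); unfold w0; nra).
    apply is_lim_spec. intros eps. simpl.
    exists (Rmax 0 (w0 / (qmin * eps^2 * c))).
    intros t Ht.
    assert (Ht0 : 0 < t) by (eapply Rle_lt_trans; [apply Rmax_l| apply Ht]).
    assert (Ht1 : w0 / (qmin * eps^2 * c) < t) by (eapply Rle_lt_trans; [apply Rmax_r| apply Ht]).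
    pose proof (cond_pos eps) as He.
    assert (Hq2 : 0 < qmin * eps^2 * c) by (apply Rmult_lt_0_compat; [apply Rmult_lt_0_compat; [auto| apply pow2_gt_0; lra]|auto]).
    assert (Hexp : 1 + c * t <= exp (c * t)) by apply exp_ineq1_le.
    assert (w0 < qmin * eps^2 * (c * t)).
    { apply Rmult_lt_compat_l with (r := qmin * eps^2 * c) in Ht1; auto.
      replace (qmin * eps ^ 2 * c * (w0 / (qmin * eps ^ 2 * c))) with w0 in Ht1 by (field; nra).
      nra. }
    specialize (Hd t (Rlt_le _ _ Ht0)).
    pose proof (Wlow (x t)). pose proof (exp_pos (c * t)).
    pose proof (sdist_nonneg (x t) E).
    rewrite Rminus_0_r, Rabs_right by lra.
    set (s := sdist (x t) E) in *.
    assert (qmin * s^2 * exp (c * t) <= w0).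
    { eapply Rle_trans; [|apply Hd]. apply Rmult_le_compat_r; lra. }
    assert (qmin * s^2 * exp (c * t) < qmin * eps^2 * exp (c * t)) by nra.
    assert (s^2 < eps^2).
    { apply Rmult_lt_reg_r with (r := qmin * exp (c * t)). nra. nra. }
    nra.
Qed.


Lemma quad_semi a b d x y : a <= 0 -> d <= 0 -> b^2 <= a * d ->
  a * x^2 + 2 * b * x * y + d * y^2 <= 0.
Proof.
  intros Ha Hd Hb. destruct (Req_dec a 0) as [->|Hn].
  - assert (b = 0) by nra. subst. nra.
  - assert (a * (a * x^2 + 2 * b * x * y + d * y^2) = (a * x + b * y)^2 + (a * d - b^2) * y^2) by ring.
    assert (0 <= (a * x + b * y)^2 + (a * d - b^2) * y^2).
    { pose proof (pow2_ge_0 (a * x + b * y)). pose proof (pow2_ge_0 y).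
      assert (0 <= (a * d - b^2) * y^2) by (apply Rmult_le_pos; lra). lra. }
    set (Qv := a * x^2 + 2 * b * x * y + d * y^2) in *.
    destruct (Rle_dec Qv 0) as [|Hq]; auto. exfalso.
    assert (a * Qv < 0) by (apply Rmult_neg_pos; lra). lra.
Qed.

Lemma quad2 A B D : A < 0 -> 0 < A * D - B^2 ->
  exists k, 0 < k /\ forall x y, A * x^2 + 2 * B * x * y + D * y^2 <= - k * (x^2 + y^2).
Proof.
  intros HA HD.
  assert (HD0 : D < 0) by nra.
  set (k := (A * D - B^2) / (- (A + D))).
  assert (Hk : 0 < k) by (unfold k; apply Rdiv_lt_0_compat; lra).
  exists k. split; auto. intros x y.
  assert (E1 : k * (- (A + D)) = A * D - B^2) by (unfold k; field; lra).
  assert (a1 : A + k <= 0) by nra.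
  assert (a2 : D + k <= 0) by nra.
  assert (a3 : B^2 <= (A + k) * (D + k)) by nra.
  pose proof (quad_semi (A + k) B (D + k) x y a1 a2 a3). nra.
Qed.

Lemma cross_bound c u v kv : 0 < kv -> c * u * v <= kv / 4 * u^2 + c^2 / kv * v^2.
Proof.
  intros Hk.
  assert (kv * (kv / 4 * u^2 + c^2 / kv * v^2 - c * u * v) = (kv * u / 2 - c * v)^2) by (field; lra).
  assert (0 <= kv / 4 * u^2 + c^2 / kv * v^2 - c * u * v).
  { apply Rmult_le_reg_l with kv; auto. rewrite H. rewrite Rmult_0_r. apply pow2_ge_0. }
  lra.
Qed.

Lemma quad4 A1 B1 D1 A2 B2 D2 c12 c14 c32 c34 :
  A1 < 0 -> 0 < A1 * D1 - B1^2 -> A2 < 0 -> 0 < A2 * D2 - B2^2 ->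
  exists lam k, 0 < lam /\ 0 < k /\ forall y1 y2 y3 y4,
    A1 * y1^2 + 2 * B1 * y1 * y3 + D1 * y3^2
    + lam * (A2 * y2^2 + 2 * B2 * y2 * y4 + D2 * y4^2)
    + y1 * (c12 * y2 + c14 * y4) + y3 * (c32 * y2 + c34 * y4)
    <= - k * (y1^2 + y2^2 + y3^2 + y4^2).
Proof.
  intros H1 H2 H3 H4.
  destruct (quad2 _ _ _ H1 H2) as [kv [Hkv Qv]].
  destruct (quad2 _ _ _ H3 H4) as [ka [Hka Qa]].
  set (C := c12^2 / kv + c14^2 / kv + c32^2 / kv + c34^2 / kv).
  assert (HC : 0 <= C).
  { unfold C. assert (forall c, 0 <= c^2 / kv) by (intros; apply Rdiv_le_0_compat; [apply pow2_ge_0|lra]).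
    pose proof (H c12); pose proof (H c14); pose proof (H c32); pose proof (H c34). lra. }
  exists ((C + 1) / ka), (Rmin (kv / 2) 1).
  split. { apply Rdiv_lt_0_compat; lra. }
  split. { apply Rmin_pos; lra. }
  intros y1 y2 y3 y4.
  specialize (Qv y1 y3). specialize (Qa y2 y4).
  pose proof (cross_bound c12 y1 y2 kv Hkv).
  pose proof (cross_bound c14 y1 y4 kv Hkv).
  pose proof (cross_bound c32 y3 y2 kv Hkv).
  pose proof (cross_bound c34 y3 y4 kv Hkv).
  assert (HL : (C + 1) / ka * (A2 * y2^2 + 2 * B2 * y2 * y4 + D2 * y4^2)
     <= - (C + 1) * (y2^2 + y4^2)).
  { apply Rle_trans with ((C + 1) / ka * (- ka * (y2^2 + y4^2))).
    - apply Rmult_le_compat_l; auto. apply Rlt_le, Rdiv_lt_0_compat; lra.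
    - right. field. lra. }
  assert (Hm1 : Rmin (kv / 2) 1 <= kv / 2) by apply Rmin_l.
  assert (Hm2 : Rmin (kv / 2) 1 <= 1) by apply Rmin_r.
  assert (Hpos : 0 <= Rmin (kv / 2) 1) by (apply Rlt_le, Rmin_pos; lra).
  assert (Rmin (kv / 2) 1 * (y1^2 + y3^2) <= kv / 2 * (y1^2 + y3^2)) by (apply Rmult_le_compat_r; nra).
  assert (Rmin (kv / 2) 1 * (y2^2 + y4^2) <= 1 * (y2^2 + y4^2)) by (apply Rmult_le_compat_r; nra).
  assert (Cy : c12^2 / kv * y2^2 + c14^2 / kv * y4^2 + c32^2 / kv * y2^2 + c34^2 / kv * y4^2
              <= C * (y2^2 + y4^2)).
  { unfold C. assert (Hc2 : forall c, 0 <= c^2 / kv) by (intros; apply Rdiv_le_0_compat; [apply pow2_ge_0|lra]).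
    pose proof (Hc2 c12); pose proof (Hc2 c14); pose proof (Hc2 c32); pose proof (Hc2 c34).
    pose proof (pow2_ge_0 y2). pose proof (pow2_ge_0 y4). nra. }
  nra.
Qed.


Lemma Rpower_pos x y : 0 < Rpower x y.
Proof. unfold Rpower. apply exp_pos. Qed.

Lemma frac_pos a c n : 0 < Rpower a n / (Rpower a n + Rpower c n).
Proof.
  pose proof (Rpower_pos a n). pose proof (Rpower_pos c n).
  apply Rdiv_lt_0_compat; lra.
Qed.

Lemma params_pos p : admissible p ->
  0 < dVp12 p /\ 0 < dVp21 p /\ 0 < dAp12 p /\ 0 < dAp21 p /\ 0 < KAp1 p /\ 0 < KAp2 p.
Proof.
  intros Hp. unfold admissible in Hp.
  destruct Hp as (?&?&?&?&?&?&?&?&?&?&?&?&?&?&?&?&?&?&?&?&?&?&?).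
  unfold dVp12, dVp21, dAp12, dAp21, KAp1, KAp2.
  repeat split; try (apply Rmult_lt_0_compat; [auto| apply frac_pos]);
    apply Rmult_lt_0_compat; lra.
Qed.

Lemma LAS_master p E : admissible p -> equilibrium p E -> 0 <= sA1 E -> 0 <= sA2 E ->
  sV1 (JV1 p E) < 0 ->
  0 < sV1 (JV1 p E) * sV2 (JV2 p E) - sV2 (JV1 p E) * sV1 (JV2 p E) ->
  sA1 (JA1 p E) < 0 ->
  0 < sA1 (JA1 p E) * sA2 (JA2 p E) - sA2 (JA1 p E) * sA1 (JA2 p E) ->
  LAS p E.
Proof.
  intros Hp Heq HA1 HA2 C1 C2 C3 C4.
  pose proof (params_pos p Hp) as (P1&P2&P3&P4&P5&P6).
  pose proof Hp as Hp'. unfold admissible in Hp'.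
  destruct Hp' as (rVp&rAp&a1p&a2p&b1p&b2p&_&_&KV1p&KV2p&_).
  assert (Hb1 : 0 < 1 + b1 p * sA1 E) by nra.
  assert (Hb2 : 0 < 1 + b2 p * sA2 E) by nra.
  assert (L1 : lin (fV1 p) E (JV1 p E)) by (apply lin_fV1; lra).
  assert (L3 : lin (fV2 p) E (JV2 p E)) by (apply lin_fV2; lra).
  assert (L2 : lin (fA1 p) E (JA1 p E)) by (apply lin_fA1; lra).
  assert (L4 : lin (fA2 p) E (JA2 p E)) by (apply lin_fA2; lra).
  assert (Hbeta : 0 < sV1 (JV2 p E)).
  { unfold JV2; cbn [sV1]. apply Rmult_lt_0_compat; auto. apply Rdiv_lt_0_compat; lra. }
  assert (Hgam : 0 < sV2 (JV1 p E)).
  { unfold JV1; cbn [sV2]. apply Rmult_lt_0_compat; auto. apply Rdiv_lt_0_compat; lra. }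
  assert (Z1 : sV1 (JA1 p E) = 0) by reflexivity.
  assert (Z2 : sV2 (JA1 p E) = 0) by reflexivity.
  assert (Z3 : sV1 (JA2 p E) = 0) by reflexivity.
  assert (Z4 : sV2 (JA2 p E) = 0) by reflexivity.
  assert (e21 : sA2 (JA1 p E) = dAp21 p) by reflexivity.
  assert (e12 : sA1 (JA2 p E) = dAp12 p) by reflexivity.
  rewrite e21, e12 in C4.
  set (J11 := sV1 (JV1 p E)) in *. set (J12 := sA1 (JV1 p E)) in *.
  set (J13 := sV2 (JV1 p E)) in *. set (J14 := sA2 (JV1 p E)) in *.
  set (J31 := sV1 (JV2 p E)) in *. set (J32 := sA1 (JV2 p E)) in *.
  set (J33 := sV2 (JV2 p E)) in *. set (J34 := sA2 (JV2 p E)) in *.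
  set (a11 := sA1 (JA1 p E)) in *. set (a22 := sA2 (JA2 p E)) in *.
  destruct (quad4 (J31 * J11) (J31 * J13) (J13 * J33)
                  (dAp12 p * a11) (dAp12 p * dAp21 p) (dAp21 p * a22)
                  (J31 * J12) (J31 * J14) (J13 * J32) (J13 * J34))
    as [lam [k [Hlam [Hk Hq]]]].
  - nra.
  - replace (J31 * J11 * (J13 * J33) - (J31 * J13)^2) with
      ((J31 * J13) * (J11 * J33 - J13 * J31)) by ring.
    apply Rmult_lt_0_compat; nra.
  - nra.
  - replace (dAp12 p * a11 * (dAp21 p * a22) - (dAp12 p * dAp21 p)^2) with
      ((dAp12 p * dAp21 p) * (a11 * a22 - dAp21 p * dAp12 p)) by ring.
    apply Rmult_lt_0_compat; nra.
  - apply (LAS_lyap p E (St J31 (lam * dAp12 p) J13 (lam * dAp21 p))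
             (JV1 p E) (JA1 p E) (JV2 p E) (JA2 p E) k); cbn [sV1 sA1 sV2 sA2]; auto;
      try nra.
    intros x. specialize (Hq (sV1 x - sV1 E) (sA1 x - sA1 E) (sV2 x - sV2 E) (sA2 x - sA2 E)).
    unfold Lq, dotd, ssq. cbn [sV1 sA1 sV2 sA2].
    rewrite Z1, Z2, Z3, Z4, e21, e12. fold J11 J12 J13 J14 J31 J32 J33 J34 a11 a22.
    eapply Rle_trans; [|exact Hq]. right. ring.
Qed.


Lemma eq0 p : equilibrium p (St 0 0 0 0).
Proof.
  unfold equilibrium, fV1, fA1, fV2, fA2; cbn [sV1 sA1 sV2 sA2].
  unfold Rdiv. repeat split; ring.
Qed.

Lemma case1 p : admissible p -> rA p < rA_min p -> LAS p (St 0 0 0 0).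
Proof.
  intros Hp Hr.
  pose proof (params_pos p Hp) as (P1&P2&P3&P4&P5&P6).
  pose proof Hp as Hp'. unfold admissible in Hp'.
  destruct Hp' as (rVp&rAp&a1p&a2p&b1p&b2p&_&_&KV1p&KV2p&_&_&_&m1&m2&m3&m4&_).
  apply LAS_master; auto; try apply eq0; cbn [sA1 sA2]; try lra.
  - unfold JV1; cbn [sV1 sA1 sV2 sA2].
    replace (rV p * (0 / (0 + a1 p)) * (1 - 2 * 0 / KV1 p) - dVp12 p * (1 / (1 + b1 p * 0)) - muV1 p)
      with (- dVp12 p - muV1 p) by (field; lra). lra.
  - unfold JV1, JV2; cbn [sV1 sA1 sV2 sA2].
    replace (rV p * (0 / (0 + a1 p)) * (1 - 2 * 0 / KV1 p) - dVp12 p * (1 / (1 + b1 p * 0)) - muV1 p)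
      with (- dVp12 p - muV1 p) by (field; lra).
    replace (rV p * (0 / (0 + a2 p)) * (1 - 2 * 0 / KV2 p) - dVp21 p * (1 / (1 + b2 p * 0)) - muV2 p)
      with (- dVp21 p - muV2 p) by (field; lra).
    replace (dVp21 p * (1 / (1 + b2 p * 0))) with (dVp21 p) by (field; lra).
    replace (dVp12 p * (1 / (1 + b1 p * 0))) with (dVp12 p) by (field; lra).
    nra.
  - unfold rA_min, rA_bar, Delta_rA in Hr.
    set (D := (dAp21 p - dAp12 p + muA2 p - muA1 p) ^ 2 + 4 * dAp21 p * dAp12 p) in *.
    assert (HD : 0 <= D) by (unfold D; pose proof (pow2_ge_0 (dAp21 p - dAp12 p + muA2 p - muA1 p)); nra).
    pose proof (sqrt_pos D). pose proof (sqrt_sqrt D HD).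
    unfold JA1, JA2; cbn [sV1 sA1 sV2 sA2].
    replace (rA p * (1 - 2 * 0 / KAp1 p) - dAp12 p - muA1 p) with (rA p - dAp12 p - muA1 p) by (field; lra).
    replace (rA p * (1 - 2 * 0 / KAp2 p) - dAp21 p - muA2 p) with (rA p - dAp21 p - muA2 p) by (field; lra).
    set (u := / 2 * (dAp12 p + muA1 p + dAp21 p + muA2 p) - rA p).
    assert (Hu : / 2 * sqrt D < u) by (unfold u; lra).
    assert (Hu2 : D / 4 < u^2) by nra.
    assert (Hprod : (rA p - dAp12 p - muA1 p) * (rA p - dAp21 p - muA2 p) - dAp21 p * dAp12 p = u^2 - D / 4)
      by (unfold u, D; field).
    nra.
  - unfold rA_min, rA_bar, Delta_rA in Hr.
    set (D := (dAp21 p - dAp12 p + muA2 p - muA1 p) ^ 2 + 4 * dAp21 p * dAp12 p) in *.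
    assert (HD : 0 <= D) by (unfold D; pose proof (pow2_ge_0 (dAp21 p - dAp12 p + muA2 p - muA1 p)); nra).
    pose proof (sqrt_pos D). pose proof (sqrt_sqrt D HD).
    unfold JA1, JA2; cbn [sV1 sA1 sV2 sA2].
    replace (rA p * (1 - 2 * 0 / KAp1 p) - dAp12 p - muA1 p) with (rA p - dAp12 p - muA1 p) by (field; lra).
    replace (rA p * (1 - 2 * 0 / KAp2 p) - dAp21 p - muA2 p) with (rA p - dAp21 p - muA2 p) by (field; lra).
    set (u := / 2 * (dAp12 p + muA1 p + dAp21 p + muA2 p) - rA p).
    assert (Hu : / 2 * sqrt D < u) by (unfold u; lra).
    assert (Hu2 : D / 4 < u^2) by nra.
    assert (Hprod : (rA p - dAp12 p - muA1 p) * (rA p - dAp21 p - muA2 p) - dAp21 p * dAp12 p = u^2 - D / 4)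
      by (unfold u, D; field).
    lra.
Qed.


Lemma block_gen x1 x2 X1 X2 t1 t2 e12 e21 :
  0 < x1 -> 0 < x2 -> 0 < t1 -> 0 < t2 -> 0 < e12 -> 0 < e21 ->
  X1 * x1 + e21 * x2 = 0 -> X2 * x2 + e12 * x1 = 0 ->
  X1 - t1 < 0 /\ 0 < (X1 - t1) * (X2 - t2) - e21 * e12.
Proof.
  intros h1 h2 h3 h4 h5 h6 E1 E2.
  assert (F1 : (X1 - t1) * x1 = - (e21 * x2 + t1 * x1)) by lra.
  assert (F2 : (X2 - t2) * x2 = - (e12 * x1 + t2 * x2)) by lra.
  assert (G1 : X1 - t1 < 0).
  { destruct (Rlt_dec (X1 - t1) 0) as [|Hn]; auto. exfalso.
    assert (0 <= (X1 - t1) * x1) by (apply Rmult_le_pos; lra). nra. }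
  assert (G2 : X2 - t2 < 0).
  { destruct (Rlt_dec (X2 - t2) 0) as [|Hn]; auto. exfalso.
    assert (0 <= (X2 - t2) * x2) by (apply Rmult_le_pos; lra). nra. }
  split; auto.
  assert (P : (X1 - t1) * (X2 - t2) * (x1 * x2) = (e21 * x2 + t1 * x1) * (e12 * x1 + t2 * x2)).
  { replace ((X1 - t1) * (X2 - t2) * (x1 * x2)) with (((X1 - t1) * x1) * ((X2 - t2) * x2)) by ring.
    rewrite F1, F2. ring. }
  assert (Q : e21 * e12 * (x1 * x2) < (e21 * x2 + t1 * x1) * (e12 * x1 + t2 * x2)).
  { assert (0 < t1 * x1 * (e12 * x1 + t2 * x2)) by (apply Rmult_lt_0_compat; nra).
    assert (0 < e21 * x2 * (t2 * x2)) by (apply Rmult_lt_0_compat; nra). nra. }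
  assert (0 < x1 * x2) by nra.
  assert (((X1 - t1) * (X2 - t2) - e21 * e12) * (x1 * x2) > 0) by nra.
  destruct (Rlt_dec 0 ((X1 - t1) * (X2 - t2) - e21 * e12)) as [|Hn]; auto. exfalso.
  assert (((X1 - t1) * (X2 - t2) - e21 * e12) * (x1 * x2) <= 0) by (apply Rmult_le_0_r; lra). lra.
Qed.

Lemma Ablock p E : admissible p -> fA1 p E = 0 -> fA2 p E = 0 -> 0 < sA1 E -> 0 < sA2 E ->
  sA1 (JA1 p E) < 0 /\ 0 < sA1 (JA1 p E) * sA2 (JA2 p E) - sA2 (JA1 p E) * sA1 (JA2 p E).
Proof.
  intros Hp F1 F2 HA1 HA2.
  pose proof (params_pos p Hp) as (P1&P2&P3&P4&P5&P6).
  pose proof Hp as Hp'. unfold admissible in Hp'.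
  destruct Hp' as (rVp&rAp&_).
  unfold JA1, JA2; cbn [sV1 sA1 sV2 sA2].
  replace (rA p * (1 - 2 * sA1 E / KAp1 p) - dAp12 p - muA1 p) with
    ((rA p * (1 - sA1 E / KAp1 p) - dAp12 p - muA1 p) - rA p * sA1 E / KAp1 p) by (field; lra).
  replace (rA p * (1 - 2 * sA2 E / KAp2 p) - dAp21 p - muA2 p) with
    ((rA p * (1 - sA2 E / KAp2 p) - dAp21 p - muA2 p) - rA p * sA2 E / KAp2 p) by (field; lra).
  apply block_gen with (x1 := sA1 E) (x2 := sA2 E); auto.
  - apply Rdiv_lt_0_compat; nra.
  - apply Rdiv_lt_0_compat; nra.
  - unfold fA1 in F1. rewrite <- F1. ring.
  - unfold fA2 in F2. rewrite <- F2. ring.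
Qed.

Lemma case2 p A1 A2 : admissible p -> 0 < A1 -> 0 < A2 -> equilibrium p (St 0 A1 0 A2) ->
  mB1 p A1 A2 < 0 -> 0 < mB2 p A1 A2 -> LAS p (St 0 A1 0 A2).
Proof.
  intros Hp HA1 HA2 Heq HB1 HB2.
  pose proof (params_pos p Hp) as (P1&P2&P3&P4&P5&P6).
  pose proof Hp as Hp'. unfold admissible in Hp'.
  destruct Hp' as (rVp&rAp&a1p&a2p&b1p&b2p&_&_&KV1p&KV2p&_).
  destruct (Ablock p (St 0 A1 0 A2) Hp (proj1 (proj2 Heq)) (proj2 (proj2 (proj2 Heq))) HA1 HA2) as [AB1 AB2].
  assert (Hb1 : 0 < 1 + b1 p * A1) by nra.
  assert (Hb2 : 0 < 1 + b2 p * A2) by nra.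
  assert (Ej11 : sV1 (JV1 p (St 0 A1 0 A2)) = j11 p A1)
    by (unfold JV1, j11; cbn [sV1 sA1 sV2 sA2]; field; lra).
  assert (Ej33 : sV2 (JV2 p (St 0 A1 0 A2)) = j33 p A2)
    by (unfold JV2, j33; cbn [sV1 sA1 sV2 sA2]; field; lra).
  assert (Eg : sV2 (JV1 p (St 0 A1 0 A2)) = dVp21 p / (1 + b2 p * A2))
    by (unfold JV1; cbn [sV1 sA1 sV2 sA2]; field; lra).
  assert (Eb : sV1 (JV2 p (St 0 A1 0 A2)) = dVp12 p / (1 + b1 p * A1))
    by (unfold JV2; cbn [sV1 sA1 sV2 sA2]; field; lra).
  assert (Hg : 0 < dVp21 p / (1 + b2 p * A2)) by (apply Rdiv_lt_0_compat; lra).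
  assert (Hbb : 0 < dVp12 p / (1 + b1 p * A1)) by (apply Rdiv_lt_0_compat; lra).
  unfold mB1, mB2 in *.
  apply LAS_master; auto; cbn [sA1 sA2]; try lra; rewrite ?Ej11, ?Ej33, ?Eg, ?Eb.
  - nra.
  - lra.
Qed.

Lemma case3 p E : admissible p -> 0 < sV1 E -> 0 < sA1 E -> 0 < sV2 E -> 0 < sA2 E ->
  equilibrium p E -> LAS p E.
Proof.
  intros Hp HV1 HA1 HV2 HA2 Heq.
  pose proof (params_pos p Hp) as (P1&P2&P3&P4&P5&P6).
  pose proof Hp as Hp'. unfold admissible in Hp'.
  destruct Hp' as (rVp&rAp&a1p&a2p&b1p&b2p&_&_&KV1p&KV2p&_).
  destruct Heq as [F1 [F2 [F3 F4]]].
  destruct (Ablock p E Hp F2 F4 HA1 HA2) as [AB1 AB2].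
  assert (Hb1 : 0 < 1 + b1 p * sA1 E) by nra.
  assert (Hb2 : 0 < 1 + b2 p * sA2 E) by nra.
  assert (Hg1 : 0 < sA1 E / (sA1 E + a1 p)) by (apply Rdiv_lt_0_compat; lra).
  assert (Hg2 : 0 < sA2 E / (sA2 E + a2 p)) by (apply Rdiv_lt_0_compat; lra).
  assert (VB : sV1 (JV1 p E) < 0 /\
     0 < sV1 (JV1 p E) * sV2 (JV2 p E) - sV2 (JV1 p E) * sV1 (JV2 p E)).
  { unfold JV1, JV2; cbn [sV1 sA1 sV2 sA2].
    replace (rV p * (sA1 E / (sA1 E + a1 p)) * (1 - 2 * sV1 E / KV1 p) - dVp12 p * (1 / (1 + b1 p * sA1 E)) - muV1 p)
      with ((rV p * (sA1 E / (sA1 E + a1 p)) * (1 - sV1 E / KV1 p) - dVp12 p * (1 / (1 + b1 p * sA1 E)) - muV1 p)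
            - rV p * (sA1 E / (sA1 E + a1 p)) * sV1 E / KV1 p) by (field; lra).
    replace (rV p * (sA2 E / (sA2 E + a2 p)) * (1 - 2 * sV2 E / KV2 p) - dVp21 p * (1 / (1 + b2 p * sA2 E)) - muV2 p)
      with ((rV p * (sA2 E / (sA2 E + a2 p)) * (1 - sV2 E / KV2 p) - dVp21 p * (1 / (1 + b2 p * sA2 E)) - muV2 p)
            - rV p * (sA2 E / (sA2 E + a2 p)) * sV2 E / KV2 p) by (field; lra).
    apply block_gen with (x1 := sV1 E) (x2 := sV2 E); auto.
    - apply Rdiv_lt_0_compat; [|lra]. apply Rmult_lt_0_compat; [nra|auto].
    - apply Rdiv_lt_0_compat; [|lra]. apply Rmult_lt_0_compat; [nra|auto].
    - apply Rmult_lt_0_compat; auto. apply Rdiv_lt_0_compat; lra.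
    - apply Rmult_lt_0_compat; auto. apply Rdiv_lt_0_compat; lra.
    - unfold fV1 in F1. rewrite <- F1. unfold Rdiv. ring.
    - unfold fV2 in F3. rewrite <- F3. unfold Rdiv. ring. }
  destruct VB.
  apply LAS_master; auto; try lra. split; auto.
Qed.


Lemma poly_cont (g : R -> R) : (forall z, ex_derive g z) -> continuity g.
Proof.
  intros H z. destruct (H z) as [l Hl]. eapply cont_of_der; eauto.
Qed.

Lemma exist2 r1 r2 K1 K2 e12 e21 m1 m2 :
  0 < r1 -> 0 < r2 -> 0 < K1 -> 0 < K2 -> 0 < e12 -> 0 < e21 -> 0 < m1 -> 0 < m2 ->
  e12 + m1 <= r1 ->
  exists X1 X2, 0 < X1 /\ 0 < X2 /\
    r1 * X1 * (1 - X1 / K1) - e12 * X1 + e21 * X2 - m1 * X1 = 0 /\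
    r2 * X2 * (1 - X2 / K2) - e21 * X2 + e12 * X1 - m2 * X2 = 0.
Proof.
  intros hr1 hr2 hK1 hK2 he12 he21 hm1 hm2 Hs.
  set (s1 := r1 - e12 - m1).
  assert (Hs1 : 0 <= s1) by (unfold s1; lra).
  set (sg := r2 - e21 - m2).
  set (psi := fun z => (r1 * z / K1 - s1) / e21).
  set (g := fun z => e12 + sg * psi z - r2 * z * (psi z)^2 / K2).
  set (a0 := K1 * s1 / r1).
  assert (Ha0 : 0 <= a0) by (unfold a0; apply Rmult_le_pos; [nra| apply Rlt_le, Rinv_0_lt_compat; lra]).
  assert (Hpsi0 : psi a0 = 0) by (unfold psi, a0; field; lra).
  assert (Hg0 : g a0 = e12) by (unfold g; rewrite Hpsi0; field; lra).
  assert (Hcont : continuity g).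
  { apply poly_cont. intros z. unfold g, psi. auto_derive. auto. }
  destruct (cont_eps g a0 (Hcont a0) (e12 / 2)) as [d [Hd Hdd]]; [lra|].
  set (xp := a0 + Rmin (d / 2) (K1 * e21 / (2 * r1))).
  assert (Hm : 0 < Rmin (d / 2) (K1 * e21 / (2 * r1))).
  { apply Rmin_pos; [lra|]. apply Rdiv_lt_0_compat; nra. }
  assert (Hxp1 : a0 < xp) by (unfold xp; lra).
  assert (Hxp2 : xp <= a0 + K1 * e21 / (2 * r1)) by (unfold xp; pose proof (Rmin_r (d/2) (K1 * e21 / (2 * r1))); lra).
  assert (Hgp : 0 < g xp).
  { assert (Rabs (xp - a0) < d).
    { rewrite Rabs_right by lra. unfold xp. pose proof (Rmin_l (d/2) (K1 * e21 / (2 * r1))). lra. }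
    specialize (Hdd xp H). rewrite Hg0 in Hdd. apply Rabs_def2 in Hdd. lra. }
  set (c := r2 * K1 * e21 / (r1 * K2)).
  assert (Hc : 0 < c) by (unfold c; apply Rdiv_lt_0_compat; [apply Rmult_lt_0_compat; [apply Rmult_lt_0_compat|]|apply Rmult_lt_0_compat]; lra).
  set (u := 1 + (e12 + Rabs sg) / c).
  assert (Hu : 1 <= u).
  { unfold u. assert (0 <= (e12 + Rabs sg) / c) by (apply Rdiv_le_0_compat; [pose proof (Rabs_pos sg); lra| lra]). lra. }
  set (xm := K1 * (s1 + e21 * u) / r1).
  assert (Hpsim : psi xm = u) by (unfold psi, xm; field; lra).
  assert (Hxm : a0 + K1 * e21 / r1 <= xm).
  { unfold xm, a0. replace (K1 * (s1 + e21 * u) / r1) with (K1 * s1 / r1 + K1 * e21 / r1 * u) by (field; lra).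
    assert (0 < K1 * e21 / r1) by (apply Rdiv_lt_0_compat; nra). nra. }
  assert (Hxpm : xp < xm).
  { assert (0 < K1 * e21 / r1) by (apply Rdiv_lt_0_compat; nra).
    assert (K1 * e21 / (2 * r1) = K1 * e21 / r1 / 2) by (field; lra). lra. }
  assert (Hgm : g xm < 0).
  { unfold g. rewrite Hpsim.
    assert (Hx1 : K1 * e21 * u / r1 <= xm).
    { unfold xm. replace (K1 * (s1 + e21 * u) / r1) with (K1 * s1 / r1 + K1 * e21 * u / r1) by (field; lra).
      assert (0 <= K1 * s1 / r1) by (fold a0; lra). lra. }
    assert (Hx2 : c * u^3 <= r2 * xm * u^2 / K2).
    { unfold c. replace (r2 * K1 * e21 / (r1 * K2) * u^3) with (r2 * (K1 * e21 * u / r1) * u^2 / K2) by (field; lra).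
      unfold Rdiv. apply Rmult_le_compat_r; [apply Rlt_le, Rinv_0_lt_compat; lra|].
      apply Rmult_le_compat_r; [apply pow2_ge_0|]. apply Rmult_le_compat_l; lra. }
    assert (Hx3 : c * u^2 <= c * u^3).
    { apply Rmult_le_compat_l; [lra|]. replace (u^3) with (u^2 * u) by ring. 
      pose proof (pow2_ge_0 u). nra. }
    assert (Hx4 : c * u^2 = c * u + (e12 + Rabs sg) * u) by (unfold u; field; lra).
    assert (Hx5 : sg * u <= Rabs sg * u) by (apply Rmult_le_compat_r; [lra| apply Rle_abs]).
    assert (e12 <= e12 * u) by nra.
    assert (0 < c * u) by nra.
    lra. }
  destruct (IVT (fun z => - g z) xp xm) as [z [Hz Hgz]].
  { intros w. apply continuity_pt_opp. apply Hcont. }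
  { auto. }
  { lra. }
  { lra. }
  assert (Hgz0 : g z = 0) by lra.
  assert (Hz0 : 0 < z) by lra.
  assert (Hpz : 0 < psi z).
  { unfold psi. apply Rdiv_lt_0_compat; [|lra].
    assert (a0 < z) by lra. unfold a0 in H.
    assert (r1 * (K1 * s1 / r1) < r1 * z) by (apply Rmult_lt_compat_l; lra).
    replace (r1 * (K1 * s1 / r1)) with (K1 * s1) in H0 by (field; lra).
    assert (s1 * K1 < r1 * z) by lra.
    assert (s1 < r1 * z / K1).
    { apply Rmult_lt_reg_r with K1; auto. replace (r1 * z / K1 * K1) with (r1 * z) by (field; lra). lra. }
    lra. }
  exists z, (z * psi z). split; auto. split; [nra|]. split.
  - unfold psi, s1. field. lra.
  - unfold g in Hgz0.
    replace (r2 * (z * psi z) * (1 - z * psi z / K2) - e21 * (z * psi z) + e12 * z - m2 * (z * psi z))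
      with (z * (e12 + sg * psi z - r2 * z * psi z ^ 2 / K2)) by (unfold sg; field; lra).
    rewrite Hgz0. ring.
Qed.


Lemma ge1_div a b : 0 < b -> 1 <= a / b -> b <= a.
Proof.
  intros Hb H. apply Rmult_le_compat_r with (r := b) in H; [|lra].
  replace (a / b * b) with a in H by (field; lra). lra.
Qed.

Theorem theorem3 (p : params) (Hp : admissible p) :
  (* 1. *)
  (equilibrium p (St 0 0 0 0) /\
   (rA p < rA_min p -> LAS p (St 0 0 0 0))) /\
  (* 2. *)
  ((1 <= Q0A1 p \/ 1 <= Q0A2 p) ->
     exists A1p A2p, 0 < A1p /\ 0 < A2p /\ equilibrium p (St 0 A1p 0 A2p)) /\
  (forall A1p A2p, 0 < A1p -> 0 < A2p -> equilibrium p (St 0 A1p 0 A2p) ->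
     mB1 p A1p A2p < 0 -> 0 < mB2 p A1p A2p -> LAS p (St 0 A1p 0 A2p)) /\
  (* 3. *)
  ((1 <= Q0A1 p \/ 1 <= Q0A2 p) ->
     forall A1p A2p, 0 < A1p -> 0 < A2p -> equilibrium p (St 0 A1p 0 A2p) ->
       (1 <= S0V1 p A1p \/ 1 <= S0V2 p A2p) ->
       exists V1p V2p, 0 < V1p /\ 0 < V2p /\ equilibrium p (St V1p A1p V2p A2p)) /\
  (forall E : state, 0 < sV1 E -> 0 < sA1 E -> 0 < sV2 E -> 0 < sA2 E ->
     equilibrium p E -> 0 < mC1 p E -> 0 < mC2 p E -> LAS p E).
Proof.
  pose proof (params_pos p Hp) as (P1&P2&P3&P4&P5&P6).
  pose proof Hp as Hp'. unfold admissible in Hp'.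
  destruct Hp' as (rVp&rAp&a1p&a2p&b1p&b2p&_&_&KV1p&KV2p&_&_&_&m1&m2&m3&m4&_).
  split; [split; [apply eq0| apply case1; auto]|].
  split.
  { intros [HQ|HQ].
    - unfold Q0A1 in HQ. apply ge1_div in HQ; [|lra].
      destruct (exist2 (rA p) (rA p) (KAp1 p) (KAp2 p) (dAp12 p) (dAp21 p) (muA1 p) (muA2 p))
        as [X1 [X2 [H1 [H2 [E1 E2]]]]]; auto; try lra.
      exists X1, X2. split; auto. split; auto.
      unfold equilibrium, fV1, fA1, fV2, fA2; cbn [sV1 sA1 sV2 sA2].
      repeat split; try (unfold Rdiv; ring); [rewrite <- E1 | rewrite <- E2]; ring.
    - unfold Q0A2 in HQ. apply ge1_div in HQ; [|lra].
      destruct (exist2 (rA p) (rA p) (KAp2 p) (KAp1 p) (dAp21 p) (dAp12 p) (muA2 p) (muA1 p))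
        as [X1 [X2 [H1 [H2 [E1 E2]]]]]; auto; try lra.
      exists X2, X1. split; auto. split; auto.
      unfold equilibrium, fV1, fA1, fV2, fA2; cbn [sV1 sA1 sV2 sA2].
      repeat split; try (unfold Rdiv; ring); [rewrite <- E2 | rewrite <- E1]; ring. }
  split.
  { intros A1 A2 H1 H2 Heq HB1 HB2. apply case2; auto. }
  split.
  { intros _ A1 A2 HA1 HA2 Heq HS.
    assert (Hb1 : 0 < 1 + b1 p * A1) by nra.
    assert (Hb2 : 0 < 1 + b2 p * A2) by nra.
    assert (Hg1 : 0 < rV p * (A1 / (A1 + a1 p))) by (apply Rmult_lt_0_compat; [lra| apply Rdiv_lt_0_compat; lra]).
    assert (Hg2 : 0 < rV p * (A2 / (A2 + a2 p))) by (apply Rmult_lt_0_compat; [lra| apply Rdiv_lt_0_compat; lra]).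
    assert (He1 : 0 < dVp12 p * (1 / (1 + b1 p * A1))) by (apply Rmult_lt_0_compat; [lra| apply Rdiv_lt_0_compat; lra]).
    assert (He2 : 0 < dVp21 p * (1 / (1 + b2 p * A2))) by (apply Rmult_lt_0_compat; [lra| apply Rdiv_lt_0_compat; lra]).
    assert (Q1 : dVp12 p / (1 + b1 p * A1) = dVp12 p * (1 / (1 + b1 p * A1))) by (field; lra).
    assert (Q2 : dVp21 p / (1 + b2 p * A2) = dVp21 p * (1 / (1 + b2 p * A2))) by (field; lra).
    destruct Heq as [_ [FA1 [_ FA2]]].
    destruct HS as [HS|HS].
    - unfold S0V1 in HS. rewrite Q1 in HS. apply ge1_div in HS; [|lra].
      destruct (exist2 (rV p * (A1 / (A1 + a1 p))) (rV p * (A2 / (A2 + a2 p))) (KV1 p) (KV2 p)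
                 (dVp12 p * (1 / (1 + b1 p * A1))) (dVp21 p * (1 / (1 + b2 p * A2))) (muV1 p) (muV2 p))
        as [X1 [X2 [H1 [H2 [E1 E2]]]]]; auto; try lra.
      exists X1, X2. split; auto. split; auto.
      unfold equilibrium. split; [|split; [exact FA1|split; [|exact FA2]]].
      + unfold fV1; cbn [sV1 sA1 sV2 sA2]. rewrite <- E1. ring.
      + unfold fV2; cbn [sV1 sA1 sV2 sA2]. rewrite <- E2. ring.
    - unfold S0V2 in HS. rewrite Q2 in HS. apply ge1_div in HS; [|lra].
      destruct (exist2 (rV p * (A2 / (A2 + a2 p))) (rV p * (A1 / (A1 + a1 p))) (KV2 p) (KV1 p)
                 (dVp21 p * (1 / (1 + b2 p * A2))) (dVp12 p * (1 / (1 + b1 p * A1))) (muV2 p) (muV1 p))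
        as [X1 [X2 [H1 [H2 [E1 E2]]]]]; auto; try lra.
      exists X2, X1. split; auto. split; auto.
      unfold equilibrium. split; [|split; [exact FA1|split; [|exact FA2]]].
      + unfold fV1; cbn [sV1 sA1 sV2 sA2]. rewrite <- E2. ring.
      + unfold fV2; cbn [sV1 sA1 sV2 sA2]. rewrite <- E1. ring. }
  intros E H1 H2 H3 H4 Heq _ _. apply case3; auto.
Qed.
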